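(* Let $N,\mu,\beta,\sigma,\gamma,p>0$ and $0<\rho<1$ and consider $$\begin{aligned}S'&=\mu N-\tfrac{\beta}{N}S(1-\rho)I-\tfrac{p}{N}S-\mu S, & E'&=\tfrac{\beta}{N}S(1-\rho)I-(\sigma+\mu) E, & I'&=\sigma E-(\gamma+\mu) I,\\ R'&=\gamma I-\mu R, & V'&=\tfrac{p}{N}S-\mu V.\end{aligned}$$ Let $\mathcal{R}_0=\dfrac{\mu N\sigma\beta(1-\rho)}{(\sigma+\mu)(\gamma+\mu)(p+\mu N)}$. If $\mathcal{R}_0>1$, then the endemic equilibrium $P^e=(S^e,E^e,I^e,R^e,V^e)$ given by $$S^e=\frac{(\sigma+\mu)(\gamma+\mu)N}{\sigma\beta(1-\rho)},\quad I^e=\frac{\mu N\sigma\beta(1-\rho)-(\sigma+\mu)(\gamma+\mu)(p+\mu N)}{(\sigma+\mu)(\gamma+\mu)\beta(1-\rho)},$$ $$E^e=\frac{\gamma+\mu}{\sigma}I^e,\quad R^e=\frac{\gamma}{\mu}I^e,\quad V^e=\frac{p}{\mu N}S^e$$ is asymptotically stable.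
   Context: SEIR model with vaccination at constant effective rate $p$ and equal birth/death rate $\mu$; $\mathcal{R}_0$ is the reproductive number, and $\mathcal{R}_0>1$ is equivalent to $I^e>0$. *)

(* Defs.v *)
From Stdlib Require Import Reals Lra.
From Coquelicot Require Import Coquelicot.
Open Scope R_scope.

Record state := mkState { sS : R; sE : R; sI : R; sR : R; sV : R }.

Definition seirv_field (N mu beta sigma gamma p rho : R) (X : state) : state :=
  let S := sS X in let E := sE X in let I := sI X in
  let Rr := sR X in let V := sV X in
  mkState
    (mu * N - beta / N * S * (1 - rho) * I - p / N * S - mu * S)
    (beta / N * S * (1 - rho) * I - (sigma + mu) * E)
    (sigma * E - (gamma + mu) * I)
    (gamma * I - mu * Rr)
    (p / N * S - mu * V).

Definition sdist (X Y : state) : R :=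
  sqrt ((sS X - sS Y)^2 + (sE X - sE Y)^2 + (sI X - sI Y)^2
        + (sR X - sR Y)^2 + (sV X - sV Y)^2).

Definition zero_state : state := mkState 0 0 0 0 0.

Definition is_solution_on (f : state -> state) (x : R -> state) (T : Rbar) : Prop :=
  (forall t, 0 < t -> Rbar_lt t T ->
     is_derive (fun s => sS (x s)) t (sS (f (x t))) /\
     is_derive (fun s => sE (x s)) t (sE (f (x t))) /\
     is_derive (fun s => sI (x s)) t (sI (f (x t))) /\
     is_derive (fun s => sR (x s)) t (sR (f (x t))) /\
     is_derive (fun s => sV (x s)) t (sV (f (x t)))) /\
  filterlim (fun s => sS (x s)) (at_right 0) (locally (sS (x 0))) /\
  filterlim (fun s => sE (x s)) (at_right 0) (locally (sE (x 0))) /\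
  filterlim (fun s => sI (x s)) (at_right 0) (locally (sI (x 0))) /\
  filterlim (fun s => sR (x s)) (at_right 0) (locally (sR (x 0))) /\
  filterlim (fun s => sV (x s)) (at_right 0) (locally (sV (x 0))).

Definition is_equilibrium (f : state -> state) (Pe : state) : Prop :=
  f Pe = zero_state.

Definition lyap_stable (f : state -> state) (Pe : state) : Prop :=
  (forall eps, 0 < eps -> exists delta, 0 < delta /\
     forall (T : Rbar) (x : R -> state), is_solution_on f x T ->
       sdist (x 0) Pe < delta ->
       forall t, 0 <= t -> Rbar_lt t T -> sdist (x t) Pe < eps) /\
  (exists delta, 0 < delta /\ forall X0, sdist X0 Pe < delta ->
     exists x, is_solution_on f x p_infty /\ x 0 = X0).

Definition attractive (f : state -> state) (Pe : state) : Prop :=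
  exists delta, 0 < delta /\
    forall x, is_solution_on f x p_infty -> sdist (x 0) Pe < delta ->
      is_lim (fun t => sdist (x t) Pe) p_infty 0.

Definition asymptotically_stable (f : state -> state) (Pe : state) : Prop :=
  lyap_stable f Pe /\ attractive f Pe.

Definition repro_number (N mu beta sigma gamma p rho : R) : R :=
  mu * N * sigma * beta * (1 - rho) /
  ((sigma + mu) * (gamma + mu) * (p + mu * N)).

Definition endemic_eq (N mu beta sigma gamma p rho : R) : state :=
  let Se := (sigma + mu) * (gamma + mu) * N / (sigma * beta * (1 - rho)) in
  let Ie := (mu * N * sigma * beta * (1 - rho)
             - (sigma + mu) * (gamma + mu) * (p + mu * N))
            / ((sigma + mu) * (gamma + mu) * beta * (1 - rho)) in
  mkState Se ((gamma + mu) / sigma * Ie) Ie (gamma / mu * Ie) (p / (mu * N) * Se).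

(* Main.v *)
Require Import Defs.
From Stdlib Require Import Reals Psatz Lra.
From Coquelicot Require Import Coquelicot.
Open Scope R_scope.

Definition rc (h : R -> R) (a : R) : Prop :=
  forall eps, 0 < eps -> exists d, 0 < d /\ forall u, a <= u < a + d -> Rabs (h u - h a) < eps.

Lemma rc_of_continuous h a : continuous h a -> rc h a.
Proof.
  intros Hc eps He.
  destruct (proj1 (filterlim_locally h (h a)) Hc (mkposreal eps He)) as [d Hd].
  exists d; split; [apply cond_pos|].
  intros u Hu. apply (Hd u). unfold ball; simpl; unfold AbsRing_ball, abs, minus, plus, opp; simpl.
  rewrite Rabs_right; lra.
Qed.

Lemma rc_of_at_right h a : filterlim h (at_right a) (locally (h a)) -> rc h a.
Proof.
  intros Hc eps He.
  destruct (proj1 (filterlim_locally h (h a)) Hc (mkposreal eps He)) as [d Hd].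
  exists d; split; [apply cond_pos|].
  intros u Hu. destruct (Req_dec u a) as [->|Hne].
  - unfold Rminus; rewrite Rplus_opp_r, Rabs_R0; auto.
  - apply (Hd u). unfold ball; simpl; unfold AbsRing_ball, abs, minus, plus, opp; simpl.
    rewrite Rabs_right; lra. lra.
Qed.

Lemma cont_of_derive h u d : is_derive h u d -> continuity_pt h u.
Proof.
  intros H. apply is_derive_Reals in H. apply derivable_continuous_pt. exists d; exact H.
Qed.

Lemma mono_le h d a b : a < b -> rc h a ->
  (forall u, a < u <= b -> is_derive h u (d u)) ->
  (forall u, a < u <= b -> d u <= 0) -> h b <= h a.
Proof.
  intros Hab Hrc Hd Hneg.
  assert (Key : forall e, a < e < b -> h b <= h e).
  { intros e He.
    destruct (MVT_gen h e b d) as [c [Hc Heq]].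
    - intros x Hx. rewrite Rmin_left in Hx by lra. rewrite Rmax_right in Hx by lra. apply Hd; lra.
    - intros x Hx. rewrite Rmin_left in Hx by lra. rewrite Rmax_right in Hx by lra.
      apply (cont_of_derive h x (d x)). apply Hd; lra.
    - rewrite Rmin_left in Hc by lra. rewrite Rmax_right in Hc by lra.
      assert (d c <= 0) by (apply Hneg; lra).
      assert (d c * (b - e) <= 0) by (apply Rmult_le_0_r; lra). lra. }
  destruct (Rle_dec (h b) (h a)) as [ok|nok]; [exact ok|].
  exfalso. destruct (Hrc (h b - h a)) as [dd [Hdd Hu]]; [lra|].
  set (e := a + Rmin dd (b - a) / 2).
  assert (Hm1 : Rmin dd (b - a) <= dd) by apply Rmin_l.
  assert (Hm2 : Rmin dd (b - a) <= b - a) by apply Rmin_r.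
  assert (Hm3 : 0 < Rmin dd (b - a)) by (apply Rmin_pos; lra).
  specialize (Hu e). specialize (Key e).
  assert (H1 : Rabs (h e - h a) < h b - h a) by (apply Hu; unfold e; lra).
  assert (H2 : h b <= h e) by (apply Key; unfold e; lra).
  apply Rabs_def2 in H1. lra.
Qed.

Definition lc (h : R -> R) (a : R) : Prop :=
  forall eps, 0 < eps -> exists d, 0 < d /\ forall u, Rabs (u - a) < d -> Rabs (h u - h a) < eps.

Lemma lc_of_derive h u d : is_derive h u d -> lc h u.
Proof.
  intros H eps He.
  assert (Hc : continuous h u).
  { apply continuity_pt_filterlim. apply (cont_of_derive h u d H). }
  destruct (proj1 (filterlim_locally h (h u)) Hc (mkposreal eps He)) as [dd Hd].
  exists dd; split; [apply cond_pos|].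
  intros v Hv. apply (Hd v). exact Hv.
Qed.

Lemma rc_of_lc h a : lc h a -> rc h a.
Proof.
  intros H eps He. destruct (H eps He) as [d [Hd Hu]]. exists d; split; auto.
  intros u Hu'. apply Hu. rewrite Rabs_right; lra.
Qed.

Lemma invariance h d l t1 : 0 < t1 -> rc h 0 ->
  (forall u, 0 < u <= t1 -> is_derive h u (d u)) ->
  (forall u, 0 < u <= t1 -> h u < l -> d u <= 0) -> h 0 < l -> h t1 <= h 0.
Proof.
  intros Ht1 Hrc0 Hd Hneg Hl.
  set (A := fun s => 0 <= s <= t1 /\ forall u, 0 <= u <= s -> h u <= h 0).
  assert (HA0 : A 0).
  { split; [lra|]. intros u Hu. replace u with 0 by lra. lra. }
  assert (Hb : bound A) by (exists t1; intros s [Hs _]; lra).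
  destruct (completeness A Hb (ex_intro _ 0 HA0)) as [tau [Hub Hlub]].
  assert (Htau0 : 0 <= tau) by (apply Hub; exact HA0).
  assert (Htau1 : tau <= t1) by (apply Hlub; intros s [Hs _]; lra).
  assert (Hi : forall u, 0 <= u < tau -> h u <= h 0).
  { intros u Hu. destruct (Classical_Prop.classic (exists s, A s /\ u < s)) as [[s [[_ Hs] Hus]]|Hn].
    - apply Hs; lra.
    - exfalso. assert (tau <= u); [|lra]. apply Hlub. intros s Hs.
      destruct (Rle_dec s u) as [?|Hsu]; [auto|]. exfalso; apply Hn; exists s; split; auto; lra. }
  assert (Hii : h tau <= h 0).
  { destruct (Req_dec tau 0) as [->|Hne]; [lra|].
    assert (Hlc : lc h tau) by (apply (lc_of_derive h tau (d tau)); apply Hd; lra).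
    destruct (Rle_dec (h tau) (h 0)) as [ok|nok]; [exact ok|exfalso].
    destruct (Hlc (h tau - h 0)) as [dd [Hdd Hu]]; [lra|].
    set (u := Rmax 0 (tau - dd / 2)).
    assert (Hu1 : 0 <= u) by apply Rmax_l.
    assert (Hu2 : tau - dd/2 <= u) by apply Rmax_r.
    assert (Hu3 : u < tau) by (unfold u; apply Rmax_lub_lt; lra).
    assert (H1 : Rabs (h u - h tau) < h tau - h 0) by (apply Hu; rewrite Rabs_left; lra).
    assert (H2 := Hi u (conj Hu1 Hu3)). apply Rabs_def2 in H1. lra. }
  assert (Hiii : tau = t1).
  { destruct (Req_dec tau t1) as [ok|Hne]; [exact ok|exfalso].
    assert (Hrc : rc h tau).
    { destruct (Req_dec tau 0) as [->|Hne0]; [exact Hrc0|].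
      apply rc_of_lc. apply (lc_of_derive h tau (d tau)). apply Hd; lra. }
    destruct (Hrc (l - h tau)) as [dd [Hdd Hu]]; [lra|].
    set (s' := tau + Rmin dd (t1 - tau) / 2).
    assert (Hm1 : Rmin dd (t1 - tau) <= dd) by apply Rmin_l.
    assert (Hm2 : Rmin dd (t1 - tau) <= t1 - tau) by apply Rmin_r.
    assert (Hm3 : 0 < Rmin dd (t1 - tau)) by (apply Rmin_pos; lra).
    assert (HAs : A s').
    { split; [unfold s'; lra|]. intros u Hu'.
      destruct (Rlt_le_dec u tau) as [Hlt|Hge]; [apply Hi; lra|].
      destruct (Req_dec u tau) as [->|Hne']; [exact Hii|].
      assert (h u <= h tau); [|lra].
      apply (mono_le h d tau u); [lra|exact Hrc| |].
      - intros v Hv. apply Hd. unfold s' in Hu'; lra.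
      - intros v Hv. apply Hneg; [unfold s' in Hu'; lra|].
        assert (Rabs (h v - h tau) < l - h tau) by (apply Hu; unfold s' in Hu'; lra).
        apply Rabs_def2 in H. lra. }
    assert (s' <= tau) by (apply Hub; exact HAs). unfold s' in H; lra. }
  subst tau. exact Hii.
Qed.

Lemma lip_cont (g : R -> R) C x : 0 <= C -> (forall u v, Rabs (g u - g v) <= C * Rabs (u - v)) -> continuous g x.
Proof.
  intros HC Hl. apply (proj2 (filterlim_locally g (g x))).
  intros eps. assert (Hp : 0 < eps / (C + 1)) by (apply Rdiv_lt_0_compat; [apply cond_pos|lra]).
  exists (mkposreal _ Hp).
  intros y Hy. unfold ball in Hy |- *; simpl in *. unfold AbsRing_ball, abs, minus, plus, opp in *; simpl in *.
  eapply Rle_lt_trans; [apply Hl|].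
  destruct eps as [e He]; simpl in *.
  assert (Hr : Rabs (y - x) * (C + 1) < e).
  { replace e with (e / (C+1) * (C+1)) by (field; apply Rgt_not_eq; lra). apply Rmult_lt_compat_r; [lra|exact Hy]. }
  assert (0 <= Rabs (y - x)) by apply Rabs_pos. nra.
Qed.

Lemma ex_RInt_cont (g : R -> R) a b : (forall x, continuous g x) -> ex_RInt g a b.
Proof. intros H. apply (ex_RInt_continuous (V:=R_CompleteNormedModule)). intros; apply H. Qed.

Lemma RInt_diff (g : R -> R) s t : (forall x, continuous g x) -> RInt g 0 t - RInt g 0 s = RInt g s t.
Proof.
  intros H. rewrite <- (RInt_Chasles g 0 s t) by (apply ex_RInt_cont; auto).
  unfold plus; simpl. ring.
Qed.

Lemma RInt_bound_const (g : R -> R) s t B : (forall x, continuous g x) -> (forall x, Rabs (g x) <= B) ->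
  Rabs (RInt g s t) <= B * Rabs (t - s).
Proof.
  intros Hc Hb. destruct (Rle_dec s t) as [Hst|Hst].
  - rewrite (Rabs_right (t - s)) by lra. rewrite Rmult_comm. apply abs_RInt_le_const; auto. apply ex_RInt_cont; auto.
  - rewrite <- opp_RInt_swap by (apply ex_RInt_cont; auto). unfold opp; simpl. rewrite Rabs_Ropp.
    rewrite (Rabs_left (t - s)) by lra. replace (- (t - s)) with (s - t) by ring. rewrite Rmult_comm.
    apply abs_RInt_le_const; auto; [lra|]. apply ex_RInt_cont; auto.
Qed.

Lemma abs_RInt_le_fun (f g : R -> R) a b : a <= b -> ex_RInt f a b -> ex_RInt g a b ->
  (forall x, a < x < b -> Rabs (f x) <= g x) -> Rabs (RInt f a b) <= RInt g a b.
Proof.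
  intros Hab Hf Hg H. apply Rabs_le. split.
  - assert (Ho : RInt (fun x => opp (g x)) a b <= RInt f a b).
    { apply RInt_le; auto. apply (ex_RInt_opp (V:=R_NormedModule)); auto. intros x Hx. specialize (H x Hx).
      unfold opp; simpl. assert (Hq := Rle_abs (- f x)). rewrite Rabs_Ropp in Hq. lra. }
    rewrite (RInt_opp (V:=R_CompleteNormedModule)) in Ho by auto. unfold opp in Ho; simpl in Ho. lra.
  - apply RInt_le; auto. intros x Hx. specialize (H x Hx).
    apply Rle_trans with (Rabs (f x)); [apply Rle_abs|]. lra.
Qed.

Lemma RInt_exp C a t : 0 < a -> RInt (fun s => C * exp (a * s)) 0 t = C * (exp (a * t) - 1) / a.
Proof.
  intros Ha. apply is_RInt_unique.
  replace (C * (exp (a * t) - 1) / a) with (minus (C * exp (a * t) / a) (C * exp (a * 0) / a)).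
  2:{ unfold minus, plus, opp; simpl. rewrite Rmult_0_r, exp_0. field. lra. }
  apply (is_RInt_derive (fun s => C * exp (a * s) / a)).
  - intros x _. auto_derive; auto. field. lra.
  - intros x _. apply continuity_pt_filterlim. apply derivable_continuous_pt.
    apply derivable_pt_mult; [apply derivable_pt_const|].
    apply (derivable_pt_comp (fun s => a * s) exp). 
    + apply derivable_pt_mult; [apply derivable_pt_const|apply derivable_pt_id].
    + apply derivable_pt_exp.
Qed.

Definition cmp (i : nat) (X : state) : R :=
  match i with 0 => sS X | 1 => sE X | 2 => sI X | 3 => sR X | 4 => sV X | _ => 0 end.
Definition mk (f : nat -> R) : state := mkState (f 0%nat) (f 1%nat) (f 2%nat) (f 3%nat) (f 4%nat).
Definition dst (X Y : state) : R :=
  Rabs (sS X - sS Y) + Rabs (sE X - sE Y) + Rabs (sI X - sI Y) + Rabs (sR X - sR Y) + Rabs (sV X - sV Y).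

Lemma cmp_mk i f : (i < 5)%nat -> cmp i (mk f) = f i.
Proof. intros H. do 5 (destruct i as [|i]; [reflexivity|]). lia. Qed.

Lemma cmp_big i X : (5 <= i)%nat -> cmp i X = 0.
Proof. intros H. do 5 (destruct i as [|i]; [lia|]). reflexivity. Qed.

Lemma dst_le X Y C : (forall i, (i < 5)%nat -> Rabs (cmp i X - cmp i Y) <= C) -> dst X Y <= 5 * C.
Proof.
  intros H. unfold dst.
  assert (H0 := H 0%nat ltac:(lia)). assert (H1 := H 1%nat ltac:(lia)). assert (H2 := H 2%nat ltac:(lia)).
  assert (H3 := H 3%nat ltac:(lia)). assert (H4 := H 4%nat ltac:(lia)). simpl in *. lra.
Qed.

Lemma dst_ge X Y i : Rabs (cmp i X - cmp i Y) <= dst X Y.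
Proof.
  unfold dst. assert (A1 := Rabs_pos (sS X - sS Y)). assert (A2 := Rabs_pos (sE X - sE Y)).
  assert (A3 := Rabs_pos (sI X - sI Y)). assert (A4 := Rabs_pos (sR X - sR Y)). assert (A5 := Rabs_pos (sV X - sV Y)).
  do 5 (destruct i as [|i]; [simpl; lra|]). simpl. rewrite Rminus_0_r, Rabs_R0. lra.
Qed.

Lemma mk_cmp X : mk (fun i => cmp i X) = X.
Proof. destruct X; reflexivity. Qed.

Lemma RInt_minus_R (f g : R -> R) a b : ex_RInt f a b -> ex_RInt g a b ->
  RInt (fun s => f s - g s) a b = RInt f a b - RInt g a b.
Proof. intros Hf Hg. apply (RInt_minus (V:=R_CompleteNormedModule)); auto. Qed.

Lemma pow2_pos n : 0 < 2 ^ n.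
Proof. apply pow_lt; lra. Qed.

Lemma pow2_ge n : INR n <= 2 ^ n.
Proof.
  induction n as [|n IH]; [simpl; lra|]. rewrite S_INR; simpl.
  assert (1 <= 2 ^ n) by (apply pow_R1_Rle; lra). lra.
Qed.

Lemma small_geom C eps : 0 < eps -> exists N, C / 2 ^ N < eps.
Proof.
  intros He. destruct (INR_archimed eps C He) as [N HN]. exists N.
  assert (H1 := pow2_ge N). assert (H2 := pow2_pos N).
  apply (Rmult_lt_reg_r (2 ^ N)); auto. unfold Rdiv. rewrite Rmult_assoc, Rinv_l by lra. nra.
Qed.

Lemma zero_of_geom D C : (forall n, Rabs D <= C / 2 ^ n) -> D = 0.
Proof.
  intros H. destruct (Req_dec D 0) as [ok|Hne]; [exact ok|exfalso].
  assert (Hp : 0 < Rabs D) by (apply Rabs_pos_lt; auto).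
  destruct (small_geom C (Rabs D) Hp) as [N HN]. specialize (H N). lra.
Qed.

Lemma lim_abs_le u v (l1 l2 : R) n C : is_lim_seq u l1 -> is_lim_seq v l2 ->
  (forall m, (n <= m)%nat -> Rabs (u m - v m) <= C) -> Rabs (l1 - l2) <= C.
Proof.
  intros Hu Hv H. destruct (Rle_dec (Rabs (l1 - l2)) C) as [ok|nok]; [exact ok|exfalso].
  apply is_lim_seq_spec in Hu. apply is_lim_seq_spec in Hv. unfold is_lim_seq' in Hu, Hv.
  assert (Hd : 0 < (Rabs (l1 - l2) - C) / 2) by lra.
  destruct (Hu (mkposreal _ Hd)) as [N1 HN1]. destruct (Hv (mkposreal _ Hd)) as [N2 HN2].
  set (m := (n + N1 + N2)%nat).
  specialize (HN1 m ltac:(unfold m; lia)). specialize (HN2 m ltac:(unfold m; lia)). specialize (H m ltac:(unfold m; lia)).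
  simpl in *.
  assert (Rabs (l1 - l2) <= Rabs (u m - l1) + Rabs (v m - l2) + Rabs (u m - v m)).
  { replace (l1 - l2) with (- (u m - l1) + (v m - l2) + (u m - v m)) by ring.
    eapply Rle_trans; [apply Rabs_triang|]. eapply Rle_trans; [apply Rplus_le_compat_r; apply Rabs_triang|].
    rewrite Rabs_Ropp. lra. }
  lra.
Qed.

Lemma Rmax0_lip s t : Rabs (Rmax 0 t - Rmax 0 s) <= Rabs (t - s).
Proof.
  unfold Rmax. destruct (Rle_dec 0 t); destruct (Rle_dec 0 s); apply Rabs_le; split;
  try (apply Rabs_le_between'; lra);
  try (assert (H := Rle_abs (t - s)); assert (H' := Rle_abs (- (t - s))); rewrite Rabs_Ropp in H'; lra).
Qed.

Lemma add_sub (a b c : R) : a + b - (a + c) = b - c.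
Proof. ring. Qed.
Lemma add_sub' (a b : R) : a + b - a = b.
Proof. ring. Qed.

Section Picard.
Variables (F : state -> state) (B K : R) (X0 : state).
Hypotheses (HK : 0 < K) (HB0 : 0 <= B)
  (HB : forall i X, Rabs (cmp i (F X)) <= B)
  (HL : forall i X Y, Rabs (cmp i (F X) - cmp i (F Y)) <= K * dst X Y).

Fixpoint pic (n : nat) : R -> state :=
  match n with
  | O => fun _ => X0
  | S n => fun t => mk (fun i => cmp i X0 + RInt (fun s => cmp i (F (pic n s))) 0 t)
  end.

Lemma pic_S n i t : (i < 5)%nat -> cmp i (pic (S n) t) = cmp i X0 + RInt (fun s => cmp i (F (pic n s))) 0 t.
Proof. intros Hi. simpl. rewrite cmp_mk; auto. Qed.

Lemma comp_cont (x : R -> state) i C : 0 <= C ->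
  (forall j s t, (j < 5)%nat -> Rabs (cmp j (x t) - cmp j (x s)) <= C * Rabs (t - s)) ->
  forall y, continuous (fun s => cmp i (F (x s))) y.
Proof.
  intros HC Hx y. apply (lip_cont _ (K * (5 * C))); [apply Rmult_le_pos; lra|].
  intros u v. eapply Rle_trans; [apply HL|]. rewrite Rmult_assoc. apply Rmult_le_compat_l; [lra|].
  rewrite Rmult_assoc. apply dst_le. intros j Hj. apply Hx; auto.
Qed.

Lemma pic_lip n : forall i s t, (i < 5)%nat -> Rabs (cmp i (pic n t) - cmp i (pic n s)) <= B * Rabs (t - s).
Proof.
  induction n as [|n IH]; intros i s t Hi.
  - simpl. rewrite Rminus_diag, Rabs_R0. apply Rmult_le_pos; auto; apply Rabs_pos.
  - rewrite !pic_S by auto.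
    rewrite add_sub.
    assert (Hc := comp_cont (pic n) i B HB0 IH).
    rewrite RInt_diff by auto. apply RInt_bound_const; auto.
Qed.

Lemma pic_cont n i y : continuous (fun s => cmp i (F (pic n s))) y.
Proof. apply (comp_cont (pic n) i B HB0 (pic_lip n)). Qed.

Let alpha := 10 * K.
Let M := B / (2 * K).

Lemma pic_est n : forall t, 0 <= t -> dst (pic (S n) t) (pic n t) <= M * exp (alpha * t) / 2 ^ n.
Proof.
  assert (HM : 0 <= M) by (unfold M; apply Rmult_le_pos; [lra|]; apply Rlt_le, Rinv_0_lt_compat; lra).
  induction n as [|n IH]; intros t Ht.
  - simpl pow. rewrite Rdiv_1_r. apply Rle_trans with (5 * (B * t)).
    + apply dst_le. intros i Hi. rewrite pic_S by auto. simpl pic at 2.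
      rewrite add_sub'.
      replace t with (Rabs (t - 0)) at 2 by (rewrite Rminus_0_r, Rabs_right; lra).
      apply RInt_bound_const; auto. intros; apply continuous_const.
    + assert (H1 := exp_ineq1_le (alpha * t)). unfold M, alpha in *.
      replace (5 * (B * t)) with (B / (2 * K) * (10 * K * t)) by (field; lra).
      apply Rmult_le_compat_l; auto. lra.
  - apply Rle_trans with (5 * (K * M / 2 ^ n * (exp (alpha * t) - 1) / alpha)).
    + apply dst_le. intros i Hi. rewrite !pic_S by auto.
      rewrite add_sub.
      rewrite <- RInt_minus_R by (apply ex_RInt_cont; intros; apply pic_cont).
      rewrite <- RInt_exp by (unfold alpha; lra).
      apply abs_RInt_le_fun; auto.
      * apply ex_RInt_cont. intros y. apply (continuous_minus (fun s => cmp i (F (pic (S n) s))) (fun s => cmp i (F (pic n s)))); apply pic_cont.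
      * apply ex_RInt_cont. intros y. apply continuity_pt_filterlim. apply derivable_continuous_pt.
        apply derivable_pt_mult; [apply derivable_pt_const|].
        apply (derivable_pt_comp (fun s => alpha * s) exp).
        -- apply derivable_pt_mult; [apply derivable_pt_const|apply derivable_pt_id].
        -- apply derivable_pt_exp.
      * intros x Hx. eapply Rle_trans; [apply HL|].
        specialize (IH x ltac:(lra)). 
        replace (K * M / 2 ^ n * exp (alpha * x)) with (K * (M * exp (alpha * x) / 2 ^ n)) by (field; apply Rgt_not_eq, pow2_pos).
        apply Rmult_le_compat_l; lra.
    + assert (Hp := pow2_pos n). simpl pow. unfold alpha.
      replace (5 * (K * M / 2 ^ n * (exp (10 * K * t) - 1) / (10 * K))) with (M * (exp (10 * K * t) - 1) / (2 * 2 ^ n)) by (field; split; lra).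
      unfold Rdiv. apply Rmult_le_compat_r; [apply Rlt_le, Rinv_0_lt_compat; lra|]. 
      apply Rmult_le_compat_l; auto. lra.
Qed.

Lemma M_nonneg : 0 <= M.
Proof. unfold M; apply Rmult_le_pos; [lra|]; apply Rlt_le, Rinv_0_lt_compat; lra. Qed.

Lemma pic_cauchy n p t i : 0 <= t -> (i < 5)%nat ->
  Rabs (cmp i (pic (n + p) t) - cmp i (pic n t)) <= 2 * M * exp (alpha * t) * (1 / 2 ^ n - 1 / 2 ^ (n + p)).
Proof.
  intros Ht Hi. induction p as [|p IH].
  - rewrite Nat.add_0_r, Rminus_diag, Rabs_R0, Rminus_diag, Rmult_0_r. lra.
  - replace (n + S p)%nat with (S (n + p)) by lia.
    assert (H1 := pic_est (n + p) t Ht). assert (H2 := dst_ge (pic (S (n + p)) t) (pic (n + p) t) i).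
    assert (Hp := pow2_pos (n + p)).
    apply Rle_trans with (Rabs (cmp i (pic (S (n + p)) t) - cmp i (pic (n + p) t)) + Rabs (cmp i (pic (n + p) t) - cmp i (pic n t))).
    { replace (cmp i (pic (S (n + p)) t) - cmp i (pic n t)) with ((cmp i (pic (S (n + p)) t) - cmp i (pic (n + p) t)) + (cmp i (pic (n + p) t) - cmp i (pic n t))) by ring.
      apply Rabs_triang. }
    replace (2 * M * exp (alpha * t) * (1 / 2 ^ n - 1 / 2 ^ S (n + p))) with
      (M * exp (alpha * t) / 2 ^ (n + p) + 2 * M * exp (alpha * t) * (1 / 2 ^ n - 1 / 2 ^ (n + p))).
    2:{ simpl pow. field. split; apply Rgt_not_eq; try apply pow2_pos; auto. }
    lra.
Qed.

Lemma pic_cauchy' n m t i : 0 <= t -> (i < 5)%nat -> (n <= m)%nat ->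
  Rabs (cmp i (pic m t) - cmp i (pic n t)) <= 2 * M * exp (alpha * t) / 2 ^ n.
Proof.
  intros Ht Hi Hnm. replace m with (n + (m - n))%nat by lia.
  eapply Rle_trans; [apply pic_cauchy; auto|].
  assert (Hp := pow2_pos (n + (m - n))). assert (Hq := pow2_pos n).
  assert (0 <= 2 * M * exp (alpha * t)) by (assert (H := M_nonneg); assert (H' := exp_pos (alpha * t)); nra).
  assert (0 < 1 / 2 ^ (n + (m - n))) by (apply Rdiv_lt_0_compat; lra).
  unfold Rdiv at 3. rewrite <- (Rmult_1_l (/ 2 ^ n)). fold (1 / 2 ^ n). nra.
Qed.

Lemma pic_ex_lim t i : 0 <= t -> (i < 5)%nat -> ex_finite_lim_seq (fun n => cmp i (pic n t)).
Proof.
  intros Ht Hi. apply ex_lim_seq_cauchy_corr. intros eps.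
  destruct (small_geom (4 * M * exp (alpha * t)) eps (cond_pos eps)) as [N HN].
  exists N. intros n m Hn Hm.
  assert (H1 := pic_cauchy' N n t i Ht Hi Hn). assert (H2 := pic_cauchy' N m t i Ht Hi Hm).
  replace (cmp i (pic n t) - cmp i (pic m t)) with ((cmp i (pic n t) - cmp i (pic N t)) - (cmp i (pic m t) - cmp i (pic N t))) by ring.
  eapply Rle_lt_trans; [apply Rabs_triang|]. rewrite Rabs_Ropp.
  replace (4 * M * exp (alpha * t) / 2 ^ N) with (2 * (2 * M * exp (alpha * t) / 2 ^ N)) in HN by (unfold Rdiv; ring).
  lra.
Qed.

Definition xl (t : R) : state := mk (fun i => Lim_seq (fun n => cmp i (pic n (Rmax 0 t)))).

Lemma xl_lim t i : 0 <= t -> (i < 5)%nat -> is_lim_seq (fun n => cmp i (pic n t)) (cmp i (xl t)).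
Proof.
  intros Ht Hi. unfold xl. rewrite cmp_mk by auto. rewrite Rmax_right by auto.
  apply Lim_seq_correct'. apply pic_ex_lim; auto.
Qed.

Lemma xl_est n t i : 0 <= t -> (i < 5)%nat -> Rabs (cmp i (xl t) - cmp i (pic n t)) <= 2 * M * exp (alpha * t) / 2 ^ n.
Proof.
  intros Ht Hi. apply (lim_abs_le (fun m => cmp i (pic m t)) (fun _ => cmp i (pic n t)) _ _ n).
  - apply xl_lim; auto.
  - apply is_lim_seq_const.
  - intros m Hm. apply pic_cauchy'; auto.
Qed.

Lemma xl_lip i s t : (i < 5)%nat -> Rabs (cmp i (xl t) - cmp i (xl s)) <= B * Rabs (t - s).
Proof.
  intros Hi. 
  assert (E : forall u, cmp i (xl u) = cmp i (xl (Rmax 0 u))).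
  { intros u. unfold xl. rewrite !cmp_mk by auto. f_equal. apply Lim_seq_ext. intros n. f_equal. f_equal.
    unfold Rmax at 2. destruct (Rle_dec 0 (Rmax 0 u)) as [_|Hn]; [reflexivity|]. exfalso; apply Hn, Rmax_l. }
  rewrite (E t), (E s).
  apply (lim_abs_le (fun m => cmp i (pic m (Rmax 0 t))) (fun m => cmp i (pic m (Rmax 0 s))) _ _ 0).
  - apply xl_lim; auto. apply Rmax_l.
  - apply xl_lim; auto. apply Rmax_l.
  - intros m _. eapply Rle_trans; [apply pic_lip; auto|]. apply Rmult_le_compat_l; auto. apply Rmax0_lip.
Qed.

Lemma xl_cont i y : continuous (fun s => cmp i (F (xl s))) y.
Proof. apply (comp_cont xl i B HB0). intros; apply xl_lip; auto. Qed.

Lemma xl_int t i : 0 <= t -> (i < 5)%nat -> cmp i (xl t) = cmp i X0 + RInt (fun s => cmp i (F (xl s))) 0 t.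
Proof.
  intros Ht Hi. apply Rminus_diag_uniq.
  apply (zero_of_geom _ (2 * M * exp (alpha * t) + t * (K * (5 * (2 * M * exp (alpha * t)))))).
  intros n.
  assert (H1 := xl_est (S n) t i Ht Hi). rewrite pic_S in H1 by auto.
  set (g1 := fun s => cmp i (F (pic n s))) in *. set (g := fun s => cmp i (F (xl s))).
  assert (Hx : Rabs (RInt g1 0 t - RInt g 0 t) <= t * (K * (5 * (2 * M * exp (alpha * t))) / 2 ^ n)).
  { rewrite <- RInt_minus_R by (apply ex_RInt_cont; intros; first [apply pic_cont|apply xl_cont]).
    replace t with (t - 0) at 2 by ring.
    apply abs_RInt_le_const; auto.
    - apply ex_RInt_cont. intros y. apply (continuous_minus g1 g); [apply pic_cont|apply xl_cont].
    - intros s Hs. unfold g1, g. rewrite <- Rabs_Ropp, Ropp_minus_distr. eapply Rle_trans; [apply HL|].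
      unfold Rdiv. rewrite !Rmult_assoc. apply Rmult_le_compat_l; [lra|]. apply (dst_le (xl s) (pic n s)). idtac.
      intros j Hj. eapply Rle_trans; [apply xl_est; auto; lra|].
      assert (exp (alpha * s) <= exp (alpha * t)).
      { destruct (Req_dec s t) as [->|Hne]; [lra|]. apply Rlt_le, exp_increasing. unfold alpha. apply Rmult_lt_compat_l; lra. }
      assert (Hp := pow2_pos n). assert (HM := M_nonneg).
      assert (0 < / 2 ^ n) by (apply Rinv_0_lt_compat; lra). unfold Rdiv. assert (0 <= M * / 2 ^ n) by nra. nra. }
  assert (Hp := pow2_pos n).
  assert (H1' : Rabs (cmp i (xl t) - (cmp i X0 + RInt g1 0 t)) <= 2 * M * exp (alpha * t) / 2 ^ n).
  { eapply Rle_trans; [exact H1|]. simpl pow. assert (HM := M_nonneg). assert (He := exp_pos (alpha * t)).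
    unfold Rdiv. apply Rmult_le_compat_l; [nra|]. rewrite Rinv_mult. 
    assert (0 < / 2 ^ n) by (apply Rinv_0_lt_compat; lra). nra. }
  replace (cmp i (xl t) - (cmp i X0 + RInt g 0 t)) with ((cmp i (xl t) - (cmp i X0 + RInt g1 0 t)) + (RInt g1 0 t - RInt g 0 t)) by ring.
  eapply Rle_trans; [apply Rabs_triang|].
  replace ((2 * M * exp (alpha * t) + t * (K * (5 * (2 * M * exp (alpha * t))))) / 2 ^ n) with
    (2 * M * exp (alpha * t) / 2 ^ n + t * (K * (5 * (2 * M * exp (alpha * t))) / 2 ^ n)) by (field; lra).
  lra.
Qed.

End Picard.

Lemma state_ext X Y : (forall i, (i < 5)%nat -> cmp i X = cmp i Y) -> X = Y.
Proof.
  intros H. destruct X, Y.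
  assert (H0 := H 0%nat ltac:(lia)). assert (H1 := H 1%nat ltac:(lia)). assert (H2 := H 2%nat ltac:(lia)).
  assert (H3 := H 3%nat ltac:(lia)). assert (H4 := H 4%nat ltac:(lia)). simpl in *. subst. reflexivity.
Qed.

Lemma sol_of_comps (F : state -> state) (x : R -> state) :
  (forall i t, (i < 5)%nat -> 0 < t -> is_derive (fun s => cmp i (x s)) t (cmp i (F (x t)))) ->
  (forall i, (i < 5)%nat -> filterlim (fun s => cmp i (x s)) (at_right 0) (locally (cmp i (x 0)))) ->
  is_solution_on F x p_infty.
Proof.
  intros Hd Hc. split.
  - intros t Ht _. split; [exact (Hd 0%nat t ltac:(lia) Ht)|]. split; [exact (Hd 1%nat t ltac:(lia) Ht)|].
    split; [exact (Hd 2%nat t ltac:(lia) Ht)|]. split; [exact (Hd 3%nat t ltac:(lia) Ht)|]. exact (Hd 4%nat t ltac:(lia) Ht).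
  - split; [exact (Hc 0%nat ltac:(lia))|]. split; [exact (Hc 1%nat ltac:(lia))|].
    split; [exact (Hc 2%nat ltac:(lia))|]. split; [exact (Hc 3%nat ltac:(lia))|]. exact (Hc 4%nat ltac:(lia)).
Qed.

Lemma picard_exists (F : state -> state) B K : 0 < K -> 0 <= B ->
  (forall i X, Rabs (cmp i (F X)) <= B) ->
  (forall i X Y, Rabs (cmp i (F X) - cmp i (F Y)) <= K * dst X Y) ->
  forall X0, exists x, is_solution_on F x p_infty /\ x 0 = X0.
Proof.
  intros HK HB0 HB HL X0. exists (xl F X0). split.
  - apply sol_of_comps.
    + intros i t Hi Ht.
      set (g := fun s => cmp i (F (xl F X0 s))).
      assert (Hg : forall y, continuous g y) by (intros; apply (xl_cont F B K X0 HK HB0 HB HL)).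
      assert (D1 : is_derive (fun b => RInt g 0 b) t (g t)).
      { apply (is_derive_RInt g (fun b => RInt g 0 b) 0 t); [|apply Hg].
        exists (mkposreal 1 Rlt_0_1). intros y _. apply (RInt_correct (V:=R_CompleteNormedModule)). apply ex_RInt_cont; auto. }
      assert (D2 : is_derive (fun b => cmp i X0 + RInt g 0 b) t (g t)).
      { assert (H := is_derive_plus (fun _ => cmp i X0) (fun b => RInt g 0 b) t zero (g t) (is_derive_const _ _) D1).
        simpl in H. unfold plus, zero in H; simpl in H. rewrite Rplus_0_l in H. exact H. }
      apply (is_derive_ext_loc (fun b => cmp i X0 + RInt g 0 b)); [|exact D2].
      exists (mkposreal t Ht). intros y Hy. unfold ball in Hy; simpl in Hy; unfold AbsRing_ball, abs, minus, plus, opp in Hy; simpl in Hy.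
      symmetry. apply (xl_int F B K X0 HK HB0 HB HL); auto. apply Rabs_def2 in Hy. lra.
    + intros i Hi. apply (filterlim_filter_le_1 (F := locally 0) _ (filter_le_within (F := locally (0:R)) (fun u => 0 < u))).
      apply (lip_cont (fun s => cmp i (xl F X0 s)) B 0); auto. intros u v. apply (xl_lip F B K X0 HK HB0 HB HL); auto.
  - apply state_ext. intros i Hi. rewrite (xl_int F B K X0 HK HB0 HB HL) by (auto; lra).
    rewrite RInt_point. unfold zero; simpl. ring.
Qed.

Ltac nz := repeat split; try (apply Rgt_not_eq; lra); try (apply Rlt_not_eq; lra).

Section Lyap.
Variables (m a b c mu : R).
Hypotheses (Hm : 0 < m) (Ha : 0 < a) (Hb : 0 < b) (Hc : 0 < c) (Hmu : 0 < mu).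

Definition Kc := c / 2 + (m + a) ^ 2 / (2 * m) + c ^ 2 / (2 * m) + m / 4.
Definition eps := m / (4 * (Kc + m + c)).
Definition del := eps * m / (2 * mu).
Definition kap := eps * m / 16.
Definition rr := eps / 64.

Definition Gn (Y : state) : state :=
  let x := sS Y in let y := sE Y in let z := sI Y in let u := sR Y in let v := sV Y in
  mkState (- (m + a) * x - m * z - m * x * z) (b * (x + z + x * z - y)) (c * (y - z))
          (mu * (z - u)) (mu * (x - v)).

Definition Lf (Y : state) : R :=
  let x := sS Y in let y := sE Y in let z := sI Y in let u := sR Y in let v := sV Y in
  x * x / 2 + m / b * (y * y) / 2 + m / c * (z * z) / 2 + eps * (x * z) + del * (u * u + v * v) / 2.

Definition dL (Y D : state) : R :=
  sS Y * sS D + m / b * (sE Y * sE D) + m / c * (sI Y * sI D) + eps * (sS D * sI Y + sS Y * sI D)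
  + del * (sR Y * sR D + sV Y * sV D).

Definition n2 (Y : state) : R := sS Y * sS Y + sE Y * sE Y + sI Y * sI Y + sR Y * sR Y + sV Y * sV Y.

Lemma Kc_pos : 0 < Kc.
Proof. unfold Kc. assert (0 < (m + a) ^ 2 / (2 * m)) by (apply Rdiv_lt_0_compat; nra).
  assert (0 < c ^ 2 / (2 * m)) by (apply Rdiv_lt_0_compat; nra). lra. Qed.

Lemma eps_pos : 0 < eps.
Proof. unfold eps. assert (H := Kc_pos). apply Rdiv_lt_0_compat; lra. Qed.

Lemma eps_le : eps <= 1 / 4.
Proof. unfold eps. assert (H := Kc_pos). apply Rmult_le_reg_r with (4 * (Kc + m + c)); [lra|].
  unfold Rdiv. rewrite Rmult_assoc, Rinv_l by lra. nra. Qed.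

Lemma eps_le_c : eps * c <= m / 4.
Proof. unfold eps. assert (H := Kc_pos). unfold Rdiv. 
  replace (m * / (4 * (Kc + m + c)) * c) with (m * c / (4 * (Kc + m + c))) by (field; nz).
  apply Rmult_le_reg_r with (4 * (Kc + m + c)); [lra|].
  unfold Rdiv. rewrite Rmult_assoc, Rinv_l by lra. nra. Qed.

Lemma eps_Kc : eps * Kc <= m / 4.
Proof. unfold eps. assert (H := Kc_pos). 
  replace (m / (4 * (Kc + m + c)) * Kc) with (m * Kc / (4 * (Kc + m + c))) by (field; nz).
  apply Rmult_le_reg_r with (4 * (Kc + m + c)); [lra|].
  unfold Rdiv. rewrite Rmult_assoc, Rinv_l by lra. nra. Qed.

Lemma del_pos : 0 < del.
Proof. unfold del. assert (H := eps_pos). apply Rdiv_lt_0_compat; nra. Qed.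

Lemma kap_pos : 0 < kap.
Proof. unfold kap. assert (H := eps_pos). nra. Qed.

Lemma rr_pos : 0 < rr.
Proof. unfold rr. assert (H := eps_pos). lra. Qed.

Lemma rr_le1 : rr <= 1.
Proof. unfold rr. assert (H := eps_le). lra. Qed.

Lemma n2_nonneg Y : 0 <= n2 Y.
Proof. unfold n2. nra. Qed.

Lemma dL_G_bound Y : Rabs (sS Y) <= rr -> dL Y (Gn Y) <= - (kap / 2) * n2 Y.
Proof.
  intros Hx. destruct Y as [x y z u v]. unfold dL, Gn, n2. simpl in *.
  assert (He := eps_pos). assert (He1 := eps_le). assert (Hec := eps_le_c). assert (HeK := eps_Kc).
  set (w := y - z - x / 2).
  set (C3 := - m * x * x * z + m * x * y * z - eps * m * x * z * z).
  set (Q2 := - a * x * x - m * (w * w + 3 / 4 * (x * x)) - eps * m * (z * z) - eps * (m + a) * (x * z)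
             + eps * c * (x * w) + eps * c * (x * x) / 2 + eps * m / 2 * (z * u - u * u + x * v - v * v)).
  assert (Hsplit : x * (- (m + a) * x - m * z - m * x * z) + m / b * (y * (b * (x + z + x * z - y))) +
     m / c * (z * (c * (y - z))) + eps * ((- (m + a) * x - m * z - m * x * z) * z + x * (c * (y - z))) +
     del * (u * (mu * (z - u)) + v * (mu * (x - v))) = Q2 + C3).
  { unfold Q2, C3, w, del. field. nz. }
  rewrite Hsplit.
  assert (h1 : - eps * (m + a) * (x * z) <= eps * m / 2 * (z * z) + eps * ((m + a) ^ 2 / (2 * m)) * (x * x)).
  { assert (0 <= eps / (2 * m) * ((m * z + (m + a) * x) * (m * z + (m + a) * x))).
    { apply Rmult_le_pos; [apply Rlt_le, Rdiv_lt_0_compat; lra|apply Rle_0_sqr]. }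
    assert (E : eps / (2 * m) * ((m * z + (m + a) * x) * (m * z + (m + a) * x)) = eps * m / 2 * (z * z) + eps * ((m + a) ^ 2 / (2 * m)) * (x * x) + eps * (m + a) * (x * z)) by (field; nz).
    lra. }
  assert (h2 : eps * c * (x * w) <= m / 2 * (w * w) + eps * (eps * (c ^ 2 / (2 * m))) * (x * x)).
  { assert (0 <= / (2 * m) * ((m * w - eps * c * x) * (m * w - eps * c * x))).
    { apply Rmult_le_pos; [apply Rlt_le, Rinv_0_lt_compat; lra|apply Rle_0_sqr]. }
    assert (E : / (2 * m) * ((m * w - eps * c * x) * (m * w - eps * c * x)) = 
      m / 2 * (w * w) + eps * (eps * (c ^ 2 / (2 * m))) * (x * x) - eps * c * (x * w)) by (field; nz).
    lra. }
  assert (h3 : z * u <= (z * z + u * u) / 2) by (assert (0 <= (z - u) * (z - u)) by apply Rle_0_sqr; lra).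
  assert (h4 : x * v <= (x * x + v * v) / 2) by (assert (0 <= (x - v) * (x - v)) by apply Rle_0_sqr; lra).
  assert (h5 : eps * (c ^ 2 / (2 * m)) <= c ^ 2 / (2 * m)).
  { assert (0 < c ^ 2 / (2 * m)) by (apply Rdiv_lt_0_compat; nra). nra. }
  assert (hK : eps * (c / 2 + (m + a) ^ 2 / (2 * m) + eps * (c ^ 2 / (2 * m)) + m / 4) <= m / 4).
  { unfold Kc in HeK. nra. }
  assert (hQ : Q2 <= - (m / 2) * (x * x) - m / 2 * (w * w) - eps * m / 4 * (z * z + u * u + v * v)).
  { unfold Q2.
    assert (eps * m / 2 * (z * u - u * u + x * v - v * v) <= eps * m / 2 * ((z * z + u * u) / 2 - u * u + (x * x + v * v) / 2 - v * v)).
    { apply Rmult_le_compat_l; [nra|lra]. }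
    assert (0 <= x * x) by nra. nra. }
  assert (hy : y * y <= 3 * (w * w + z * z + x * x)).
  { replace y with (w + z + x / 2) by (unfold w; ring).
    assert (0 <= (w - z) * (w - z)) by apply Rle_0_sqr. assert (0 <= (w - x / 2) * (w - x / 2)) by apply Rle_0_sqr.
    assert (0 <= (z - x / 2) * (z - x / 2)) by apply Rle_0_sqr. assert (0 <= x * x) by apply Rle_0_sqr. nra. }
  assert (hQ2 : Q2 <= - kap * (x * x + y * y + z * z + u * u + v * v)).
  { assert (Hk := kap_pos). assert (F0 : kap * (y * y) <= kap * (3 * (w * w + z * z + x * x))) by (apply Rmult_le_compat_l; lra).
    assert (Hm' : 0 <= (1/4 - eps) * m) by (apply Rmult_le_pos; lra).
    assert (F1 : 0 <= (1/4 - eps) * m * (x * x)) by (apply Rmult_le_pos; [lra|apply Rle_0_sqr]).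
    assert (F2 : 0 <= (1/4 - eps) * m * (w * w)) by (apply Rmult_le_pos; [lra|apply Rle_0_sqr]).
    assert (F3 : 0 <= m * (x * x)) by (apply Rmult_le_pos; [lra|apply Rle_0_sqr]).
    assert (F4 : 0 <= m * (w * w)) by (apply Rmult_le_pos; [lra|apply Rle_0_sqr]).
    assert (Hem : 0 <= eps * m) by (apply Rmult_le_pos; lra).
    assert (F5 : 0 <= eps * m * (u * u)) by (apply Rmult_le_pos; [lra|apply Rle_0_sqr]).
    assert (F6 : 0 <= eps * m * (v * v)) by (apply Rmult_le_pos; [lra|apply Rle_0_sqr]).
    assert (F7 : 0 <= eps * m * (z * z)) by (apply Rmult_le_pos; [lra|apply Rle_0_sqr]).
    unfold kap in *. lra. }
  assert (hs : Rabs (z * (y - x) - eps * (z * z)) <= 2 * (x * x + y * y + z * z + u * u + v * v)).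
  { assert (0 <= (z - y) * (z - y)) by apply Rle_0_sqr. assert (0 <= (z + y) * (z + y)) by apply Rle_0_sqr.
    assert (0 <= (z - x) * (z - x)) by apply Rle_0_sqr. assert (0 <= (z + x) * (z + x)) by apply Rle_0_sqr.
    assert (0 <= z * z) by apply Rle_0_sqr. assert (0 <= u * u) by apply Rle_0_sqr. assert (0 <= v * v) by apply Rle_0_sqr.
    assert (0 <= x * x) by apply Rle_0_sqr. assert (0 <= y * y) by apply Rle_0_sqr.
    assert (0 <= eps * (z * z)) by (apply Rmult_le_pos; lra).
    assert (eps * (z * z) <= 1/4 * (z * z)) by (apply Rmult_le_compat_r; lra).
    apply Rabs_le. split; lra. }
  assert (hC : C3 <= m * rr * (2 * (x * x + y * y + z * z + u * u + v * v))).
  { replace C3 with (m * x * (z * (y - x) - eps * (z * z))) by (unfold C3; ring).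
    eapply Rle_trans; [apply Rle_abs|]. rewrite !Rabs_mult. rewrite (Rabs_right m) by lra.
    rewrite Rmult_assoc, (Rmult_assoc m rr). apply Rmult_le_compat_l; [lra|].
    apply Rmult_le_compat; auto using Rabs_pos. }
  assert (Hn : 0 <= x * x + y * y + z * z + u * u + v * v) by (assert (0 <= x * x) by apply Rle_0_sqr; assert (0 <= y * y) by apply Rle_0_sqr; assert (0 <= z * z) by apply Rle_0_sqr; assert (0 <= u * u) by apply Rle_0_sqr; assert (0 <= v * v) by apply Rle_0_sqr; lra).
  unfold rr, kap in *. lra.
Qed.

Definition lam := 1 / (4 * (1 + b / m + c / m + 1 / del)).
Definition Lam := 1 + m / b + m / c + del.

Lemma inv_helper D q : 0 < q -> 1 / q <= D -> 1 / (4 * D) <= q / 4.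
Proof.
  intros Hq HD. assert (0 < 1 / q) by (apply Rdiv_lt_0_compat; lra).
  replace (q / 4) with (1 / (4 * (1 / q))) by (field; lra).
  unfold Rdiv. rewrite !Rmult_1_l. apply Rinv_le_contravar; lra.
Qed.

Lemma eps_xz x z : Rabs (eps * (x * z)) <= x * x / 8 + m / c * (z * z) / 8.
Proof.
  assert (He := eps_pos). assert (He1 := eps_le). assert (Hec := eps_le_c).
  assert (Hxz : Rabs (x * z) <= (x * x + z * z) / 2).
  { assert (0 <= (x - z) * (x - z)) by apply Rle_0_sqr. assert (0 <= (x + z) * (x + z)) by apply Rle_0_sqr.
    apply Rabs_le; split; lra. }
  rewrite Rabs_mult, (Rabs_right eps) by lra.
  apply Rle_trans with (eps * ((x * x + z * z) / 2)); [apply Rmult_le_compat_l; lra|].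
  assert (A1 : eps * (x * x) <= 1/4 * (x * x)) by (apply Rmult_le_compat_r; [apply Rle_0_sqr|lra]).
  assert (Hq : eps <= m / c / 4).
  { apply Rmult_le_reg_r with c; [lra|]. unfold Rdiv. replace (m * / c * / 4 * c) with (m / 4) by (field; lra). lra. }
  assert (A2 : eps * (z * z) <= m / c / 4 * (z * z)) by (apply Rmult_le_compat_r; [apply Rle_0_sqr|lra]).
  lra.
Qed.

Lemma Lf_lower Y : lam * n2 Y <= Lf Y.
Proof.
  destruct Y as [x y z u v]. unfold Lf, n2; simpl.
  assert (Hd := del_pos). set (D := 1 + b / m + c / m + 1 / del).
  assert (Hbm : 0 < b / m) by (apply Rdiv_lt_0_compat; lra). assert (Hcm : 0 < c / m) by (apply Rdiv_lt_0_compat; lra).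
  assert (Hid : 0 < 1 / del) by (apply Rdiv_lt_0_compat; lra).
  assert (L1 : lam <= 1 / 4). { unfold lam. fold D. replace (1/4) with (1/1/4) by field. apply inv_helper; unfold D; lra. }
  assert (L2 : lam <= m / b / 4). { unfold lam. fold D. apply inv_helper; [apply Rdiv_lt_0_compat; lra|]. unfold D.
      replace (1 / (m / b)) with (b / m) by (field; nz). lra. }
  assert (L3 : lam <= m / c / 4). { unfold lam. fold D. apply inv_helper; [apply Rdiv_lt_0_compat; lra|]. unfold D.
      replace (1 / (m / c)) with (c / m) by (field; nz). lra. }
  assert (L4 : lam <= del / 4). { unfold lam. fold D. apply inv_helper; [lra|]. unfold D. lra. }
  assert (E := eps_xz x z). assert (E1 := Rle_abs (eps * (x * z))). assert (E2 := Rle_abs (- (eps * (x * z)))). rewrite Rabs_Ropp in E2.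
  assert (P1 : 0 <= (1/4 - lam) * (x * x)) by (apply Rmult_le_pos; [lra|apply Rle_0_sqr]).
  assert (P2 : 0 <= (m / b / 4 - lam) * (y * y)) by (apply Rmult_le_pos; [lra|apply Rle_0_sqr]).
  assert (P3 : 0 <= (m / c / 4 - lam) * (z * z)) by (apply Rmult_le_pos; [lra|apply Rle_0_sqr]).
  assert (P4 : 0 <= (del / 4 - lam) * (u * u + v * v)) by (apply Rmult_le_pos; [lra|]; assert (0 <= u * u) by apply Rle_0_sqr; assert (0 <= v * v) by apply Rle_0_sqr; lra).
  assert (P5 : 0 <= m / b * (y * y)) by (apply Rmult_le_pos; [apply Rlt_le, Rdiv_lt_0_compat; lra|apply Rle_0_sqr]).
  assert (P6 : 0 <= m / c * (z * z)) by (apply Rmult_le_pos; [apply Rlt_le, Rdiv_lt_0_compat; lra|apply Rle_0_sqr]).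
  assert (P7 : 0 <= del * (u * u + v * v)) by (apply Rmult_le_pos; [lra|]; assert (0 <= u * u) by apply Rle_0_sqr; assert (0 <= v * v) by apply Rle_0_sqr; lra).
  assert (0 <= x * x) by apply Rle_0_sqr.
  lra.
Qed.

Lemma Lf_upper Y : Lf Y <= Lam * n2 Y.
Proof.
  destruct Y as [x y z u v]. unfold Lf, n2, Lam; simpl.
  assert (Hd := del_pos).
  assert (E := eps_xz x z). assert (E1 := Rle_abs (eps * (x * z))). assert (E2 := Rle_abs (- (eps * (x * z)))). rewrite Rabs_Ropp in E2.
  assert (Q1 : 0 <= m / b) by (apply Rlt_le, Rdiv_lt_0_compat; lra).
  assert (Q2 : 0 <= m / c) by (apply Rlt_le, Rdiv_lt_0_compat; lra).
  assert (X := Rle_0_sqr x). assert (Y := Rle_0_sqr y). assert (Z := Rle_0_sqr z). assert (U := Rle_0_sqr u). assert (V := Rle_0_sqr v).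
  unfold Rsqr in *.
  assert (0 <= m / b * (x * x)) by (apply Rmult_le_pos; lra). assert (0 <= m / b * (z * z)) by (apply Rmult_le_pos; lra).
  assert (0 <= m / b * (u * u)) by (apply Rmult_le_pos; lra). assert (0 <= m / b * (v * v)) by (apply Rmult_le_pos; lra).
  assert (0 <= m / b * (y * y)) by (apply Rmult_le_pos; lra).
  assert (0 <= m / c * (x * x)) by (apply Rmult_le_pos; lra). assert (0 <= m / c * (y * y)) by (apply Rmult_le_pos; lra).
  assert (0 <= m / c * (u * u)) by (apply Rmult_le_pos; lra). assert (0 <= m / c * (v * v)) by (apply Rmult_le_pos; lra).
  assert (0 <= m / c * (z * z)) by (apply Rmult_le_pos; lra).
  assert (0 <= del * (x * x)) by (apply Rmult_le_pos; lra). assert (0 <= del * (y * y)) by (apply Rmult_le_pos; lra).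
  assert (0 <= del * (z * z)) by (apply Rmult_le_pos; lra). assert (0 <= del * (u * u)) by (apply Rmult_le_pos; lra).
  assert (0 <= del * (v * v)) by (apply Rmult_le_pos; lra).
  lra.
Qed.

Lemma lam_pos : 0 < lam.
Proof. unfold lam. assert (Hd := del_pos).
  assert (0 < b / m) by (apply Rdiv_lt_0_compat; lra). assert (0 < c / m) by (apply Rdiv_lt_0_compat; lra).
  assert (0 < 1 / del) by (apply Rdiv_lt_0_compat; lra). apply Rdiv_lt_0_compat; lra. Qed.

Lemma Lam_pos : 0 < Lam.
Proof. unfold Lam. assert (Hd := del_pos).
  assert (0 < m / b) by (apply Rdiv_lt_0_compat; lra). assert (0 < m / c) by (apply Rdiv_lt_0_compat; lra). lra. Qed.

End Lyap.

Definition cl (r v : R) : R := Rmax (- r) (Rmin r v).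

Lemma cl_bound r v : 0 <= r -> Rabs (cl r v) <= r.
Proof. intros Hr. unfold cl. apply Rabs_le. split; [apply Rmax_l|]. apply Rmax_lub; [lra|apply Rmin_l]. Qed.

Lemma cl_lip r v w : 0 <= r -> Rabs (cl r v - cl r w) <= Rabs (v - w).
Proof.
  intros Hr. unfold cl, Rmax, Rmin.
  destruct (Rle_dec r v); destruct (Rle_dec r w); destruct (Rle_dec (-r) r); destruct (Rle_dec (-r) v);
  destruct (Rle_dec (-r) w); try lra;
  apply Rabs_le; split;
  try (assert (H := Rle_abs (v - w)); assert (H' := Rle_abs (- (v - w))); rewrite Rabs_Ropp in H'; lra).
Qed.

Lemma cl_id r v : Rabs v <= r -> cl r v = v.
Proof. intros H. assert (H1 := Rle_abs v). assert (H2 := Rle_abs (- v)). rewrite Rabs_Ropp in H2.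
  unfold cl. rewrite Rmin_right by lra. rewrite Rmax_right by lra. reflexivity. Qed.

Definition clS (r : R) (Y : state) : state :=
  mkState (cl r (sS Y)) (cl r (sE Y)) (cl r (sI Y)) (cl r (sR Y)) (cl r (sV Y)).

Lemma abs_le1 x : Rabs x <= 1 -> -1 <= x <= 1.
Proof. intros H. assert (H1 := Rle_abs x). assert (H2 := Rle_abs (- x)). rewrite Rabs_Ropp in H2. lra. Qed.

Lemma abs_le_d x d : Rabs x <= d -> - d <= x <= d.
Proof. intros H. assert (H1 := Rle_abs x). assert (H2 := Rle_abs (- x)). rewrite Rabs_Ropp in H2. lra. Qed.

Section Clamp.
Variables (m a b c mu r : R).
Hypotheses (Hm : 0 < m) (Ha : 0 < a) (Hb : 0 < b) (Hc : 0 < c) (Hmu : 0 < mu) (Hr : 0 < r) (Hr1 : r <= 1).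

Definition Gc (Y : state) : state := Gn m a b c mu (clS r Y).

Lemma Gc_bound i Y : Rabs (cmp i (Gc Y)) <= 4 * (m + a + b + c + mu).
Proof.
  unfold Gc, clS, Gn, cmp.
  assert (Bx := abs_le1 _ (Rle_trans _ _ _ (cl_bound r (sS Y) ltac:(lra)) Hr1)).
  assert (By := abs_le1 _ (Rle_trans _ _ _ (cl_bound r (sE Y) ltac:(lra)) Hr1)).
  assert (Bz := abs_le1 _ (Rle_trans _ _ _ (cl_bound r (sI Y) ltac:(lra)) Hr1)).
  assert (Bu := abs_le1 _ (Rle_trans _ _ _ (cl_bound r (sR Y) ltac:(lra)) Hr1)).
  assert (Bv := abs_le1 _ (Rle_trans _ _ _ (cl_bound r (sV Y) ltac:(lra)) Hr1)).
  set (x := cl r (sS Y)) in *. set (y := cl r (sE Y)) in *. set (z := cl r (sI Y)) in *.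
  set (u := cl r (sR Y)) in *. set (v := cl r (sV Y)) in *.
  assert (Bxz : -1 <= x * z <= 1) by (split; nra).
  do 5 (destruct i as [|i]; [simpl; apply Rabs_le; split; nra|]).
  rewrite Rabs_R0. lra.
Qed.

Lemma Gc_lip i X Y : Rabs (cmp i (Gc X) - cmp i (Gc Y)) <= (5 * (m + a + b + c + mu) + 1) * dst X Y.
Proof.
  set (d := dst X Y).
  assert (Hd : 0 <= d) by (unfold d, dst; assert (A1 := Rabs_pos (sS X - sS Y)); assert (A2 := Rabs_pos (sE X - sE Y));
    assert (A3 := Rabs_pos (sI X - sI Y)); assert (A4 := Rabs_pos (sR X - sR Y)); assert (A5 := Rabs_pos (sV X - sV Y)); lra).
  assert (D : forall j, -d <= cl r (cmp j X) - cl r (cmp j Y) <= d).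
  { intros j. apply abs_le_d. eapply Rle_trans; [apply cl_lip; lra|]. apply dst_ge. }
  unfold Gc, clS, Gn, cmp.
  assert (Dx := D 0%nat). assert (Dy := D 1%nat). assert (Dz := D 2%nat). assert (Du := D 3%nat). assert (Dv := D 4%nat).
  simpl in Dx, Dy, Dz, Du, Dv.
  assert (Bx := abs_le1 _ (Rle_trans _ _ _ (cl_bound r (sS X) ltac:(lra)) Hr1)).
  assert (Bz := abs_le1 _ (Rle_trans _ _ _ (cl_bound r (sI Y) ltac:(lra)) Hr1)).
  set (x1 := cl r (sS X)) in *. set (y1 := cl r (sE X)) in *. set (z1 := cl r (sI X)) in *.
  set (u1 := cl r (sR X)) in *. set (v1 := cl r (sV X)) in *.
  set (x2 := cl r (sS Y)) in *. set (y2 := cl r (sE Y)) in *. set (z2 := cl r (sI Y)) in *.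
  set (u2 := cl r (sR Y)) in *. set (v2 := cl r (sV Y)) in *.
  assert (P1 : -d <= x1 * (z1 - z2) <= d) by (split; nra).
  assert (P2 : -d <= z2 * (x1 - x2) <= d) by (split; nra).
  assert (E : x1 * z1 - x2 * z2 = x1 * (z1 - z2) + z2 * (x1 - x2)) by ring.
  assert (kb : forall k t, 0 <= k -> -d <= t <= d -> - (k * d) <= k * t <= k * d).
  { intros k t Hk Ht. split; [|apply Rmult_le_compat_l; lra].
    replace (- (k * d)) with (k * (- d)) by ring. apply Rmult_le_compat_l; lra. }
  assert (Hma : 0 <= m + a) by lra.
  assert (K1 := kb _ _ Hma Dx). assert (K2 := kb m _ (Rlt_le _ _ Hm) Dz). assert (K3 := kb m _ (Rlt_le _ _ Hm) P1).
  assert (K4 := kb m _ (Rlt_le _ _ Hm) P2). assert (K5 := kb b _ (Rlt_le _ _ Hb) Dx). assert (K6 := kb b _ (Rlt_le _ _ Hb) Dz).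
  assert (K7 := kb b _ (Rlt_le _ _ Hb) P1). assert (K8 := kb b _ (Rlt_le _ _ Hb) P2). assert (K9 := kb b _ (Rlt_le _ _ Hb) Dy).
  assert (K10 := kb c _ (Rlt_le _ _ Hc) Dy). assert (K11 := kb c _ (Rlt_le _ _ Hc) Dz).
  assert (K12 := kb mu _ (Rlt_le _ _ Hmu) Dz). assert (K13 := kb mu _ (Rlt_le _ _ Hmu) Du).
  assert (K14 := kb mu _ (Rlt_le _ _ Hmu) Dx). assert (K15 := kb mu _ (Rlt_le _ _ Hmu) Dv).
  assert (0 <= m * d) by (apply Rmult_le_pos; lra). assert (0 <= a * d) by (apply Rmult_le_pos; lra).
  assert (0 <= b * d) by (apply Rmult_le_pos; lra). assert (0 <= c * d) by (apply Rmult_le_pos; lra).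
  assert (0 <= mu * d) by (apply Rmult_le_pos; lra).
  do 5 (destruct i as [|i]; [simpl; apply Rabs_le; split; lra|]).
  simpl. rewrite Rminus_0_r, Rabs_R0. lra.
Qed.
End Clamp.

Lemma dplus (f g : R -> R) t df dg : is_derive f t df -> is_derive g t dg -> is_derive (fun s => f s + g s) t (df + dg).
Proof. intros H1 H2. apply (is_derive_plus f g t df dg H1 H2). Qed.
Lemma dmult (f g : R -> R) t df dg : is_derive f t df -> is_derive g t dg -> is_derive (fun s => f s * g s) t (df * g t + f t * dg).
Proof. intros H1 H2. apply (is_derive_mult f g t df dg H1 H2). intros; apply Rmult_comm. Qed.
Lemma dscal (f : R -> R) k t df : is_derive f t df -> is_derive (fun s => k * f s) t (k * df).
Proof. intros H. apply is_derive_scal; auto. Qed.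
Lemma dconst (k t : R) : is_derive (fun _ => k) t 0.
Proof. apply (is_derive_const k t). Qed.
Lemma dval (f : R -> R) t l l' : is_derive f t l -> l = l' -> is_derive f t l'.
Proof. intros H ->; exact H. Qed.
Lemma dfun (f g : R -> R) t l : (forall s, f s = g s) -> is_derive f t l -> is_derive g t l.
Proof. intros H D. apply (is_derive_ext f g t l H D). Qed.

Lemma deriv_L m a b c mu (Y : R -> state) t D :
  (forall i, (i < 5)%nat -> is_derive (fun s => cmp i (Y s)) t (cmp i D)) ->
  is_derive (fun s => Lf m a b c mu (Y s)) t (dL m a b c mu (Y t) D).
Proof.
  intros H.
  assert (Dx := H 0%nat ltac:(lia)). assert (Dy := H 1%nat ltac:(lia)). assert (Dz := H 2%nat ltac:(lia)).
  assert (Du := H 3%nat ltac:(lia)). assert (Dv := H 4%nat ltac:(lia)). simpl in Dx, Dy, Dz, Du, Dv.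
  set (e := eps m a c). set (dd := del m a c mu).
  assert (H1 := dscal _ (1/2) t _ (dmult _ _ t _ _ Dx Dx)).
  assert (H2 := dscal _ (m / b / 2) t _ (dmult _ _ t _ _ Dy Dy)).
  assert (H3 := dscal _ (m / c / 2) t _ (dmult _ _ t _ _ Dz Dz)).
  assert (H4 := dscal _ e t _ (dmult _ _ t _ _ Dx Dz)).
  assert (H5 := dscal _ (dd / 2) t _ (dplus _ _ t _ _ (dmult _ _ t _ _ Du Du) (dmult _ _ t _ _ Dv Dv))).
  assert (HH := dplus _ _ t _ _ (dplus _ _ t _ _ (dplus _ _ t _ _ (dplus _ _ t _ _ H1 H2) H3) H4) H5).
  eapply dfun; [|eapply dval; [exact HH|]].
  - intros s. unfold Lf. fold e dd. simpl. lra.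
  - unfold dL. fold e dd. simpl. lra.
Qed.

Lemma rc_ext f g a : (forall s, f s = g s) -> rc f a -> rc g a.
Proof. intros E H eps He. destruct (H eps He) as [d [Hd Hu]]. exists d; split; auto. intros u Hu'. rewrite <- !E. auto. Qed.

Lemma rc_const k a : rc (fun _ => k) a.
Proof. intros eps He. exists 1; split; [lra|]. intros u _. rewrite Rminus_diag, Rabs_R0; auto. Qed.

Lemma rc_plus f g a : rc f a -> rc g a -> rc (fun s => f s + g s) a.
Proof.
  intros Hf Hg eps He. destruct (Hf (eps/2)) as [d1 [Hd1 H1]]; [lra|]. destruct (Hg (eps/2)) as [d2 [Hd2 H2]]; [lra|].
  exists (Rmin d1 d2); split; [apply Rmin_pos; auto|]. intros u Hu.
  assert (Hm1 := Rmin_l d1 d2). assert (Hm2 := Rmin_r d1 d2).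
  specialize (H1 u ltac:(lra)). specialize (H2 u ltac:(lra)).
  replace (f u + g u - (f a + g a)) with ((f u - f a) + (g u - g a)) by ring.
  eapply Rle_lt_trans; [apply Rabs_triang|]. lra.
Qed.

Lemma rc_mult f g a : rc f a -> rc g a -> rc (fun s => f s * g s) a.
Proof.
  intros Hf Hg eps He.
  set (A := 1 + Rabs (f a) + Rabs (g a)).
  assert (HA : 1 <= A) by (unfold A; assert (H1 := Rabs_pos (f a)); assert (H2 := Rabs_pos (g a)); lra).
  set (eta := Rmin 1 (eps / A)).
  assert (Heta : 0 < eta) by (apply Rmin_pos; [lra|apply Rdiv_lt_0_compat; lra]).
  assert (Heta1 : eta <= 1) by apply Rmin_l. assert (Heta2 : eta <= eps / A) by apply Rmin_r.
  destruct (Hf eta Heta) as [d1 [Hd1 H1]]. destruct (Hg eta Heta) as [d2 [Hd2 H2]].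
  exists (Rmin d1 d2); split; [apply Rmin_pos; auto|]. intros u Hu.
  assert (Hm1 := Rmin_l d1 d2). assert (Hm2 := Rmin_r d1 d2).
  specialize (H1 u ltac:(lra)). specialize (H2 u ltac:(lra)).
  replace (f u * g u - f a * g a) with ((f u - f a) * (g u - g a) + (f u - f a) * g a + f a * (g u - g a)) by ring.
  eapply Rle_lt_trans; [apply Rabs_triang|]. 
  eapply Rle_lt_trans; [apply Rplus_le_compat_r; apply Rabs_triang|]. rewrite !Rabs_mult.
  assert (P1 := Rabs_pos (f u - f a)). assert (P2 := Rabs_pos (g u - g a)).
  assert (P3 := Rabs_pos (f a)). assert (P4 := Rabs_pos (g a)).
  assert (Q1 : Rabs (f u - f a) * Rabs (g u - g a) <= eta * eta) by (apply Rmult_le_compat; lra).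
  assert (Q2 : Rabs (f u - f a) * Rabs (g a) <= eta * Rabs (g a)) by (apply Rmult_le_compat_r; lra).
  assert (Q3 : Rabs (f a) * Rabs (g u - g a) <= Rabs (f a) * eta) by (apply Rmult_le_compat_l; lra).
  assert (Q4 : eta * eta <= eta * 1) by (apply Rmult_le_compat_l; lra).
  assert (Q5 : eta * A <= eps).
  { apply Rle_trans with (eps / A * A); [apply Rmult_le_compat_r; lra|]. right; field; lra. }
  assert (Q6 : Rabs (f u - f a) * Rabs (g u - g a) < eta * eta \/ Rabs (f a) * Rabs (g u - g a) < Rabs (f a) * eta \/ True) by auto.
  assert (S1 : Rabs (f u - f a) * Rabs (g u - g a) < eta * 1).
  { apply Rle_lt_trans with (eta * Rabs (g u - g a)); [apply Rmult_le_compat_r; lra|]. apply Rmult_lt_compat_l; lra. }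
  unfold A in Q5. lra.
Qed.

Lemma rc_scal k f a : rc f a -> rc (fun s => k * f s) a.
Proof. intros H. apply (rc_mult (fun _ => k) f a (rc_const k a) H). Qed.

Lemma rc_L m a b c mu (Y : R -> state) t :
  (forall i, (i < 5)%nat -> rc (fun s => cmp i (Y s)) t) -> rc (fun s => Lf m a b c mu (Y s)) t.
Proof.
  intros H.
  assert (Rx := H 0%nat ltac:(lia)). assert (Ry := H 1%nat ltac:(lia)). assert (Rz := H 2%nat ltac:(lia)).
  assert (Ru := H 3%nat ltac:(lia)). assert (Rv := H 4%nat ltac:(lia)). simpl in Rx, Ry, Rz, Ru, Rv.
  set (e := eps m a c). set (dd := del m a c mu).
  assert (HH := rc_plus _ _ _ (rc_plus _ _ _ (rc_plus _ _ _ (rc_plus _ _ _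
     (rc_scal (1/2) _ _ (rc_mult _ _ _ Rx Rx))
     (rc_scal (m / b / 2) _ _ (rc_mult _ _ _ Ry Ry)))
     (rc_scal (m / c / 2) _ _ (rc_mult _ _ _ Rz Rz)))
     (rc_scal e _ _ (rc_mult _ _ _ Rx Rz)))
     (rc_scal (dd / 2) _ _ (rc_plus _ _ _ (rc_mult _ _ _ Ru Ru) (rc_mult _ _ _ Rv Rv)))).
  eapply rc_ext; [|exact HH]. intros s. unfold Lf. fold e dd. simpl. lra.
Qed.

Lemma rc_affine f k q a : rc f a -> rc (fun s => (f s - k) / q) a.
Proof.
  intros H. apply (rc_ext (fun s => / q * f s + - k / q)). { intros s. unfold Rdiv. ring. }
  apply rc_plus; [apply rc_scal; auto|apply rc_const].
Qed.

Lemma dlin (f : R -> R) t d k q : q <> 0 -> is_derive f t d -> is_derive (fun s => (f s - k) / q) t (d / q).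
Proof.
  intros Hq H. eapply dfun; [|eapply dval; [exact (dplus _ _ t _ _ (dscal _ (/ q) t _ H) (dconst (- k / q) t))|]].
  - intros s. simpl. field. auto.
  - simpl. field. auto.
Qed.

Lemma dden (f : R -> R) t d q : is_derive f t d -> is_derive (fun s => q * (1 + f s)) t (q * d).
Proof.
  intros H. eapply dfun; [|eapply dval; [exact (dscal _ q t _ (dplus _ _ t _ _ (dconst 1 t) H))|]].
  - intros s. simpl. ring.
  - simpl. ring.
Qed.

Lemma sol_comps F x T : is_solution_on F x T ->
  (forall i t, (i < 5)%nat -> 0 < t -> Rbar_lt t T -> is_derive (fun s => cmp i (x s)) t (cmp i (F (x t)))) /\
  (forall i, (i < 5)%nat -> filterlim (fun s => cmp i (x s)) (at_right 0) (locally (cmp i (x 0)))).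
Proof.
  intros [Hd [C0 [C1 [C2 [C3 C4]]]]]. split.
  - intros i t Hi Ht HT. destruct (Hd t Ht HT) as [D0 [D1 [D2 [D3 D4]]]].
    do 5 (destruct i as [|i]; [assumption|]). lia.
  - intros i Hi. do 5 (destruct i as [|i]; [assumption|]). lia.
Qed.

Lemma filterlim_affine (f : R -> R) l k q : filterlim f (at_right 0) (locally l) ->
  filterlim (fun s => q * (k + f s)) (at_right 0) (locally (q * (k + l))).
Proof.
  intros H. apply (filterlim_comp _ _ _ f (fun v => q * (k + v)) _ _ _ H).
  apply (lip_cont (fun v => q * (k + v)) (Rabs q) l (Rabs_pos q)).
  intros u v. rewrite <- Rabs_mult. right. f_equal. ring.
Qed.

Lemma rc_exp k a : rc (fun s => exp (k * s)) a.
Proof.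
  apply rc_of_lc. apply (lc_of_derive _ a (k * exp (k * a))). 
  auto_derive; [auto|ring].
Qed.


Ltac pos := repeat (match goal with
  | |- 0 < _ * _ => apply Rmult_lt_0_compat
  | |- 0 < _ / _ => apply Rdiv_lt_0_compat
  | |- 0 < _ + _ => apply Rplus_lt_0_compat
  end); try lra.

Section Model.
Variables (N mu beta sigma gamma p rho : R).
Hypotheses (HN : 0 < N) (Hmu : 0 < mu) (Hbeta : 0 < beta) (Hsigma : 0 < sigma) (Hgamma : 0 < gamma)
  (Hp : 0 < p) (Hrho0 : 0 < rho) (Hrho1 : rho < 1)
  (HR0 : repro_number N mu beta sigma gamma p rho > 1).

Definition kk := beta / N * (1 - rho).
Definition aa := p / N + mu.
Definition bb := sigma + mu.
Definition cc := gamma + mu.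
Definition Se := (sigma + mu) * (gamma + mu) * N / (sigma * beta * (1 - rho)).
Definition Ie := (mu * N * sigma * beta * (1 - rho) - (sigma + mu) * (gamma + mu) * (p + mu * N))
            / ((sigma + mu) * (gamma + mu) * beta * (1 - rho)).
Definition Ee := (gamma + mu) / sigma * Ie.
Definition Re := gamma / mu * Ie.
Definition Ve := p / (mu * N) * Se.
Definition mm := kk * Ie.

Lemma Pe_eq : endemic_eq N mu beta sigma gamma p rho = mkState Se Ee Ie Re Ve.
Proof. reflexivity. Qed.

Lemma Se_pos : 0 < Se.
Proof. unfold Se. pos. Qed.

Lemma Ie_pos : 0 < Ie.
Proof.
  unfold repro_number in HR0. unfold Ie.
  assert (Hd : 0 < (sigma + mu) * (gamma + mu) * (p + mu * N)) by pos.
  apply Rdiv_lt_0_compat; [|pos].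
  set (den := (sigma + mu) * (gamma + mu) * (p + mu * N)) in *.
  set (num := mu * N * sigma * beta * (1 - rho)) in *.
  assert (Eq : num = num / den * den) by (field; nz).
  assert (Hq : 0 < (num / den - 1) * den) by (apply Rmult_lt_0_compat; lra).
  lra.
Qed.

Lemma Ee_pos : 0 < Ee.
Proof. unfold Ee. assert (H := Ie_pos). apply Rmult_lt_0_compat; [apply Rdiv_lt_0_compat|]; lra. Qed.
Lemma Re_pos : 0 < Re.
Proof. unfold Re. assert (H := Ie_pos). apply Rmult_lt_0_compat; [apply Rdiv_lt_0_compat|]; lra. Qed.
Lemma Ve_pos : 0 < Ve.
Proof. unfold Ve. assert (H := Se_pos). pos. Qed.
Lemma mm_pos : 0 < mm.
Proof. unfold mm, kk. assert (H := Ie_pos). apply Rmult_lt_0_compat; [|lra].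
  apply Rmult_lt_0_compat; [apply Rdiv_lt_0_compat|]; lra. Qed.
Lemma aa_pos : 0 < aa.
Proof. unfold aa. assert (0 < p / N) by (apply Rdiv_lt_0_compat; lra). lra. Qed.
Lemma bb_pos : 0 < bb. Proof. unfold bb; lra. Qed.
Lemma cc_pos : 0 < cc. Proof. unfold cc; lra. Qed.

Lemma E1 : mu * N = kk * Se * Ie + aa * Se.
Proof. unfold kk, Se, Ie, aa. field. nz. Qed.
Lemma E2 : kk * Se * Ie = bb * Ee.
Proof. unfold kk, Se, Ee, bb. field. nz. Qed.
Lemma E3 : sigma * Ee = cc * Ie.
Proof. unfold Ee, cc. field. nz. Qed.
Lemma E4 : gamma * Ie = mu * Re.
Proof. unfold Re. field. nz. Qed.
Lemma E5 : p / N * Se = mu * Ve.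
Proof. unfold Ve. field. nz. Qed.

Definition Pv := mkState Se Ee Ie Re Ve.
Definition nrm (X : state) : state :=
  mkState ((sS X - Se) / Se) ((sE X - Ee) / Ee) ((sI X - Ie) / Ie) ((sR X - Re) / Re) ((sV X - Ve) / Ve).
Definition denorm (Y : state) : state :=
  mkState (Se * (1 + sS Y)) (Ee * (1 + sE Y)) (Ie * (1 + sI Y)) (Re * (1 + sR Y)) (Ve * (1 + sV Y)).
Definition Fld := seirv_field N mu beta sigma gamma p rho.
Definition Gm := Gn mm aa bb cc mu.

Lemma Pv_pos i : (i < 5)%nat -> 0 < cmp i Pv.
Proof.
  intros Hi. do 5 (destruct i as [|i]; [simpl; first [apply Se_pos|apply Ee_pos|apply Ie_pos|apply Re_pos|apply Ve_pos]; auto|]). lia.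
Qed.

Lemma cmp_nrm i X : (i < 5)%nat -> cmp i (nrm X) = (cmp i X - cmp i Pv) / cmp i Pv.
Proof. intros Hi. do 5 (destruct i as [|i]; [reflexivity|]). lia. Qed.

Lemma cmp_denorm i Y : (i < 5)%nat -> cmp i (denorm Y) = cmp i Pv * (1 + cmp i Y).
Proof. intros Hi. do 5 (destruct i as [|i]; [reflexivity|]). lia. Qed.

Lemma denorm_nrm X : denorm (nrm X) = X.
Proof.
  assert (H1 := Se_pos). assert (H2 := Ee_pos). assert (H3 := Ie_pos). assert (H4 := Re_pos). assert (H5 := Ve_pos).
  destruct X. unfold denorm, nrm; simpl. f_equal; field; nz.
Qed.

Lemma nrm_denorm Y : nrm (denorm Y) = Y.
Proof.
  assert (H1 := Se_pos). assert (H2 := Ee_pos). assert (H3 := Ie_pos). assert (H4 := Re_pos). assert (H5 := Ve_pos).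
  destruct Y. unfold denorm, nrm; simpl. f_equal; field; nz.
Qed.

Lemma Fld_denorm i Y : (i < 5)%nat -> cmp i (Fld (denorm Y)) = cmp i Pv * cmp i (Gm Y).
Proof.
  intros Hi. destruct Y as [x y z u v].
  destruct i as [|i]; [|destruct i as [|i]; [|destruct i as [|i]; [|destruct i as [|i]; [|destruct i as [|i]; [|lia]]]]];
  unfold Fld, seirv_field, denorm, Gm, Gn, Pv; simpl.
  - transitivity (mu * N - kk * Se * Ie * ((1 + x) * (1 + z)) - aa * Se * (1 + x)); [unfold kk, aa; ring|].
    rewrite E1. unfold mm. ring.
  - transitivity (kk * Se * Ie * ((1 + x) * (1 + z)) - bb * Ee * (1 + y)); [unfold kk, bb; ring|].
    rewrite E2. ring.
  - transitivity (sigma * Ee * (1 + y) - cc * Ie * (1 + z)); [unfold cc; ring|]. rewrite E3. ring.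
  - transitivity (gamma * Ie * (1 + z) - mu * Re * (1 + u)); [ring|]. rewrite E4. ring.
  - transitivity (p / N * Se * (1 + x) - mu * Ve * (1 + v)); [ring|]. rewrite E5. ring.
Qed.

Lemma mul_div_cancel (a b : R) : a <> 0 -> a * b / a = b.
Proof. intros H. field. auto. Qed.

Ltac posh := first [exact mm_pos | exact aa_pos | exact bb_pos | exact cc_pos | exact Hmu | lra].

Local Notation LF := (Lf mm aa bb cc mu).
Local Notation DL := (dL mm aa bb cc mu).
Local Notation LAM := (lam mm aa bb cc mu).
Local Notation LAMU := (Lam mm aa bb cc mu).
Local Notation KAP := (kap mm aa cc).
Local Notation RR := (rr mm aa cc).

Lemma LAM_pos : 0 < LAM. Proof. apply lam_pos; posh. Qed.
Lemma LAMU_pos : 0 < LAMU. Proof. apply Lam_pos; posh. Qed.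
Lemma KAP_pos : 0 < KAP. Proof. apply kap_pos; posh. Qed.
Lemma RR_pos : 0 < RR. Proof. apply rr_pos; posh. Qed.
Lemma RR_le1 : RR <= 1. Proof. apply rr_le1; posh. Qed.
Ltac posh2 := first [exact mm_pos | exact aa_pos | exact bb_pos | exact cc_pos | exact Hmu | exact RR_pos | exact RR_le1 | lra].

Lemma traj_deriv x T : is_solution_on Fld x T -> forall t, 0 < t -> Rbar_lt t T ->
  forall i, (i < 5)%nat -> is_derive (fun s => cmp i (nrm (x s))) t (cmp i (Gm (nrm (x t)))).
Proof.
  intros Hs t Ht HT i Hi. destruct (sol_comps _ _ _ Hs) as [D _].
  assert (HP := Pv_pos i Hi).
  eapply dfun; [|eapply dval; [apply (dlin (fun s => cmp i (x s)) t (cmp i (Fld (x t))) (cmp i Pv) (cmp i Pv)); [nz|apply D; auto]|]].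
  - intros s. rewrite cmp_nrm; auto.
  - rewrite <- (denorm_nrm (x t)) at 1. rewrite Fld_denorm by auto. apply mul_div_cancel. nz.
Qed.

Lemma traj_h_deriv x T : is_solution_on Fld x T -> forall t, 0 < t -> Rbar_lt t T ->
  is_derive (fun s => LF (nrm (x s))) t (DL (nrm (x t)) (Gm (nrm (x t)))).
Proof.
  intros Hs t Ht HT. apply deriv_L. intros i Hi. apply (traj_deriv x T Hs t Ht HT i Hi).
Qed.

Lemma traj_rc x T : is_solution_on Fld x T -> rc (fun s => LF (nrm (x s))) 0.
Proof.
  intros Hs. destruct (sol_comps _ _ _ Hs) as [_ C]. apply rc_L. intros i Hi.
  apply (rc_ext (fun s => (cmp i (x s) - cmp i Pv) / cmp i Pv)); [intros s; rewrite cmp_nrm; auto|].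
  apply rc_affine. apply rc_of_at_right. apply C; auto.
Qed.

Lemma sq_abs y r : 0 < r -> y * y < r * r -> Rabs y <= r.
Proof.
  intros Hr H. destruct (Rle_dec (Rabs y) r) as [ok|nok]; [exact ok|exfalso].
  assert (E : Rabs y * Rabs y = y * y) by (rewrite <- Rabs_mult; apply Rabs_right; nra).
  assert (r * r < Rabs y * Rabs y) by (apply Rmult_le_0_lt_compat; lra). lra.
Qed.

Lemma region Y : LF Y < LAM * (RR * RR) -> forall i, (i < 5)%nat -> Rabs (cmp i Y) <= RR.
Proof.
  intros H i Hi. assert (HL := Lf_lower mm aa bb cc mu ltac:(posh) ltac:(posh) ltac:(posh) ltac:(posh) ltac:(posh) Y).
  assert (Hl := LAM_pos).
  assert (Hn : n2 Y < RR * RR).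
  { apply (Rmult_lt_reg_l LAM); auto. lra. }
  apply sq_abs; [apply RR_pos|].
  destruct Y as [x y z u v]. unfold n2 in Hn; simpl in Hn.
  assert (0 <= x * x) by apply Rle_0_sqr. assert (0 <= y * y) by apply Rle_0_sqr. assert (0 <= z * z) by apply Rle_0_sqr.
  assert (0 <= u * u) by apply Rle_0_sqr. assert (0 <= v * v) by apply Rle_0_sqr.
  do 5 (destruct i as [|i]; [simpl; lra|]). lia.
Qed.

Lemma dneg Y : LF Y < LAM * (RR * RR) -> DL Y (Gm Y) <= - (KAP / 2) * n2 Y.
Proof.
  intros H. apply dL_G_bound; try posh. apply (region Y H 0%nat). lia.
Qed.

Lemma dneg' Y : LF Y < LAM * (RR * RR) -> DL Y (Gm Y) <= 0.
Proof.
  intros H. eapply Rle_trans; [apply dneg; auto|]. assert (H1 := KAP_pos). assert (H2 := n2_nonneg Y).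
  assert (0 <= KAP / 2 * n2 Y) by (apply Rmult_le_pos; lra). lra.
Qed.

Lemma Rbar_lt_le_trans u t T : u <= t -> Rbar_lt t T -> Rbar_lt u T.
Proof. intros H1 H2. destruct T; simpl in *; auto; lra. Qed.

Lemma stay x T : is_solution_on Fld x T -> LF (nrm (x 0)) < LAM * (RR * RR) ->
  forall t, 0 <= t -> Rbar_lt t T -> LF (nrm (x t)) <= LF (nrm (x 0)).
Proof.
  intros Hs H0 t Ht HT. destruct (Req_dec t 0) as [->|Hne]; [lra|].
  apply (invariance (fun s => LF (nrm (x s))) (fun u => DL (nrm (x u)) (Gm (nrm (x u)))) (LAM * (RR * RR)) t); auto; [lra|..].
  - apply (traj_rc x T Hs).
  - intros u Hu. apply (traj_h_deriv x T Hs); [lra|]. apply (Rbar_lt_le_trans u t); [lra|auto].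
  - intros u Hu Hl. apply dneg'; auto.
Qed.

Definition S2 (X : state) : R := (sS X - Se)^2 + (sE X - Ee)^2 + (sI X - Ie)^2 + (sR X - Re)^2 + (sV X - Ve)^2.
Definition Om := Se * Se + Ee * Ee + Ie * Ie + Re * Re + Ve * Ve.
Definition om := / (/ (Se * Se) + / (Ee * Ee) + / (Ie * Ie) + / (Re * Re) + / (Ve * Ve)).

Lemma sdist_eq X : sdist X (endemic_eq N mu beta sigma gamma p rho) = sqrt (S2 X).
Proof. rewrite Pe_eq. reflexivity. Qed.

Lemma S2_nonneg X : 0 <= S2 X.
Proof. unfold S2. assert (H1 := pow2_ge_0 (sS X - Se)). assert (H2 := pow2_ge_0 (sE X - Ee)).
  assert (H3 := pow2_ge_0 (sI X - Ie)). assert (H4 := pow2_ge_0 (sR X - Re)). assert (H5 := pow2_ge_0 (sV X - Ve)). lra. Qed.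

Lemma S2_nrm X : S2 X = Se * Se * (sS (nrm X) * sS (nrm X)) + Ee * Ee * (sE (nrm X) * sE (nrm X))
  + Ie * Ie * (sI (nrm X) * sI (nrm X)) + Re * Re * (sR (nrm X) * sR (nrm X)) + Ve * Ve * (sV (nrm X) * sV (nrm X)).
Proof.
  assert (H1 := Se_pos). assert (H2 := Ee_pos). assert (H3 := Ie_pos). assert (H4 := Re_pos). assert (H5 := Ve_pos).
  unfold S2, nrm; simpl. field. nz.
Qed.

Lemma Om_pos : 0 < Om.
Proof. unfold Om. assert (H1 := Se_pos). assert (H2 := Ee_pos). assert (H3 := Ie_pos). assert (H4 := Re_pos). assert (H5 := Ve_pos).
  assert (0 < Se * Se) by pos. assert (0 < Ee * Ee) by pos. assert (0 < Ie * Ie) by pos. assert (0 < Re * Re) by pos.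
  assert (0 < Ve * Ve) by pos. lra. Qed.

Lemma inv_sum_le A D : 0 < A -> / A <= D -> / D <= A.
Proof. intros HA HD. assert (0 < / A) by (apply Rinv_0_lt_compat; auto).
  rewrite <- (Rinv_inv A). apply Rinv_le_contravar; auto. Qed.

Lemma om_facts : 0 < om /\ om <= Se * Se /\ om <= Ee * Ee /\ om <= Ie * Ie /\ om <= Re * Re /\ om <= Ve * Ve.
Proof.
  assert (H1 := Se_pos). assert (H2 := Ee_pos). assert (H3 := Ie_pos). assert (H4 := Re_pos). assert (H5 := Ve_pos).
  assert (P1 : 0 < / (Se * Se)) by (apply Rinv_0_lt_compat; pos).
  assert (P2 : 0 < / (Ee * Ee)) by (apply Rinv_0_lt_compat; pos).
  assert (P3 : 0 < / (Ie * Ie)) by (apply Rinv_0_lt_compat; pos).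
  assert (P4 : 0 < / (Re * Re)) by (apply Rinv_0_lt_compat; pos).
  assert (P5 : 0 < / (Ve * Ve)) by (apply Rinv_0_lt_compat; pos).
  unfold om. split; [apply Rinv_0_lt_compat; lra|].
  repeat split; apply inv_sum_le; try pos; lra.
Qed.

Lemma S2_bounds X : om * n2 (nrm X) <= S2 X /\ S2 X <= Om * n2 (nrm X).
Proof.
  rewrite S2_nrm. unfold n2, Om.
  set (x := sS (nrm X)). set (y := sE (nrm X)). set (z := sI (nrm X)). set (u := sR (nrm X)). set (v := sV (nrm X)).
  destruct om_facts as [Ho [O1 [O2 [O3 [O4 O5]]]]].
  assert (X1 := Rle_0_sqr x). assert (X2 := Rle_0_sqr y). assert (X3 := Rle_0_sqr z). assert (X4 := Rle_0_sqr u). assert (X5 := Rle_0_sqr v).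
  unfold Rsqr in *.
  assert (A1 := Se_pos). assert (A2 := Ee_pos). assert (A3 := Ie_pos). assert (A4 := Re_pos). assert (A5 := Ve_pos).
  assert (0 <= Se * Se) by (apply Rle_0_sqr). assert (0 <= Ee * Ee) by (apply Rle_0_sqr). assert (0 <= Ie * Ie) by (apply Rle_0_sqr).
  assert (0 <= Re * Re) by (apply Rle_0_sqr). assert (0 <= Ve * Ve) by (apply Rle_0_sqr).
  split.
  - assert (om * (x * x) <= Se * Se * (x * x)) by (apply Rmult_le_compat_r; lra).
    assert (om * (y * y) <= Ee * Ee * (y * y)) by (apply Rmult_le_compat_r; lra).
    assert (om * (z * z) <= Ie * Ie * (z * z)) by (apply Rmult_le_compat_r; lra).
    assert (om * (u * u) <= Re * Re * (u * u)) by (apply Rmult_le_compat_r; lra).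
    assert (om * (v * v) <= Ve * Ve * (v * v)) by (apply Rmult_le_compat_r; lra).
    lra.
  - assert (forall A B, 0 <= A -> 0 <= B -> 0 <= A * B) by (intros; apply Rmult_le_pos; auto).
    assert (0 <= Se * Se * (y * y)) by auto. assert (0 <= Se * Se * (z * z)) by auto. assert (0 <= Se * Se * (u * u)) by auto. assert (0 <= Se * Se * (v * v)) by auto.
    assert (0 <= Ee * Ee * (x * x)) by auto. assert (0 <= Ee * Ee * (z * z)) by auto. assert (0 <= Ee * Ee * (u * u)) by auto. assert (0 <= Ee * Ee * (v * v)) by auto.
    assert (0 <= Ie * Ie * (x * x)) by auto. assert (0 <= Ie * Ie * (y * y)) by auto. assert (0 <= Ie * Ie * (u * u)) by auto. assert (0 <= Ie * Ie * (v * v)) by auto.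
    assert (0 <= Re * Re * (x * x)) by auto. assert (0 <= Re * Re * (y * y)) by auto. assert (0 <= Re * Re * (z * z)) by auto. assert (0 <= Re * Re * (v * v)) by auto.
    assert (0 <= Ve * Ve * (x * x)) by auto. assert (0 <= Ve * Ve * (y * y)) by auto. assert (0 <= Ve * Ve * (z * z)) by auto. assert (0 <= Ve * Ve * (u * u)) by auto.
    lra.
Qed.

Lemma sdist_lt X d : 0 < d -> sdist X (endemic_eq N mu beta sigma gamma p rho) < d -> S2 X < d * d.
Proof.
  intros Hd H. rewrite sdist_eq in H. assert (H0 := S2_nonneg X).
  rewrite <- (sqrt_sqrt (S2 X)) by auto. assert (0 <= sqrt (S2 X)) by apply sqrt_pos.
  apply Rmult_le_0_lt_compat; auto.
Qed.

Lemma lt_sdist X e : 0 < e -> S2 X < e * e -> sdist X (endemic_eq N mu beta sigma gamma p rho) < e.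
Proof.
  intros He H. rewrite sdist_eq. rewrite <- (sqrt_square e) by lra.
  apply sqrt_lt_1_alt. split; auto. apply S2_nonneg.
Qed.

Lemma minsq A q : 0 <= A -> 0 < q -> (A * Rmin 1 q) * (A * Rmin 1 q) <= A * A * q.
Proof.
  intros HA Hq. assert (H1 := Rmin_l 1 q). assert (H2 := Rmin_r 1 q). assert (H3 : 0 < Rmin 1 q) by (apply Rmin_pos; lra).
  assert (Rmin 1 q * Rmin 1 q <= q) by (apply Rle_trans with (1 * q); [apply Rmult_le_compat; lra|lra]).
  replace ((A * Rmin 1 q) * (A * Rmin 1 q)) with ((A * A) * (Rmin 1 q * Rmin 1 q)) by ring.
  apply Rmult_le_compat_l; auto. apply Rmult_le_pos; auto.
Qed.

Definition q1 := LAM * om / LAMU.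
Definition d0 := RR * Rmin 1 q1.

Lemma q1_pos : 0 < q1.
Proof. unfold q1. destruct om_facts as [Ho _]. assert (H1 := LAM_pos). assert (H2 := LAMU_pos). pos. Qed.

Lemma d0_pos : 0 < d0.
Proof. unfold d0. assert (H := RR_pos). assert (H' := q1_pos). apply Rmult_lt_0_compat; auto. apply Rmin_pos; lra. Qed.

Lemma init_small X d : 0 < d -> sdist X (endemic_eq N mu beta sigma gamma p rho) < d ->
  om * LF (nrm X) < LAMU * (d * d).
Proof.
  intros Hd H. apply sdist_lt in H; auto. destruct (S2_bounds X) as [B1 _].
  assert (HU := Lf_upper mm aa bb cc mu ltac:(posh) ltac:(posh) ltac:(posh) ltac:(posh) ltac:(posh) (nrm X)).
  destruct om_facts as [Ho _]. assert (HL := LAMU_pos).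
  apply Rle_lt_trans with (LAMU * (om * n2 (nrm X))).
  - replace (LAMU * (om * n2 (nrm X))) with (om * (LAMU * n2 (nrm X))) by ring. apply Rmult_le_compat_l; lra.
  - apply Rmult_lt_compat_l; auto. lra.
Qed.

Lemma init_region X : sdist X (endemic_eq N mu beta sigma gamma p rho) < d0 -> LF (nrm X) < LAM * (RR * RR).
Proof.
  intros H. assert (H1 := init_small X d0 d0_pos H). destruct om_facts as [Ho _].
  assert (HL := LAMU_pos). assert (Hq := q1_pos). assert (HR := RR_pos).
  assert (H2 : d0 * d0 <= RR * RR * q1) by (apply minsq; lra).
  assert (H3 : LAMU * (d0 * d0) <= LAMU * (RR * RR * q1)) by (apply Rmult_le_compat_l; lra).
  assert (E : LAMU * (RR * RR * q1) = om * (LAM * (RR * RR))) by (unfold q1; field; nz).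
  apply (Rmult_lt_reg_l om); auto. lra.
Qed.

Lemma stab1 e0 : 0 < e0 -> exists d, 0 < d /\ forall T x, is_solution_on Fld x T ->
  sdist (x 0) (endemic_eq N mu beta sigma gamma p rho) < d ->
  forall t, 0 <= t -> Rbar_lt t T -> sdist (x t) (endemic_eq N mu beta sigma gamma p rho) < e0.
Proof.
  intros He0. destruct om_facts as [Ho _]. assert (HL := LAM_pos). assert (HU := LAMU_pos). assert (HO := Om_pos).
  set (q2 := LAM * om / (Om * LAMU)).
  assert (Hq2 : 0 < q2) by (unfold q2; pos).
  set (d := Rmin d0 (e0 * Rmin 1 q2)).
  assert (Hd : 0 < d) by (apply Rmin_pos; [apply d0_pos|apply Rmult_lt_0_compat; auto; apply Rmin_pos; lra]).
  exists d. split; auto. intros T x Hs H0 t Ht HT.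
  assert (Hd0 : d <= d0) by apply Rmin_l. assert (Hd1 : d <= e0 * Rmin 1 q2) by apply Rmin_r.
  assert (Hreg : LF (nrm (x 0)) < LAM * (RR * RR)) by (apply init_region; lra).
  assert (Hst := stay x T Hs Hreg t Ht HT).
  assert (Hi := init_small (x 0) d Hd H0).
  assert (Hdd : d * d <= e0 * e0 * q2).
  { apply Rle_trans with ((e0 * Rmin 1 q2) * (e0 * Rmin 1 q2)); [apply Rmult_le_compat; lra|apply minsq; lra]. }
  assert (Hi2 : om * LF (nrm (x 0)) < LAMU * (e0 * e0 * q2)).
  { apply Rlt_le_trans with (LAMU * (d * d)); auto. apply Rmult_le_compat_l; lra. }
  assert (E : LAMU * (e0 * e0 * q2) = e0 * e0 * LAM * om / Om) by (unfold q2; field; nz).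
  rewrite E in Hi2.
  destruct (S2_bounds (x t)) as [_ B2].
  assert (HLt := Lf_lower mm aa bb cc mu ltac:(posh) ltac:(posh) ltac:(posh) ltac:(posh) ltac:(posh) (nrm (x t))).
  apply lt_sdist; auto.
  assert (C1 : LAM * S2 (x t) <= Om * LF (nrm (x t))).
  { apply Rle_trans with (LAM * (Om * n2 (nrm (x t)))); [apply Rmult_le_compat_l; lra|].
    replace (LAM * (Om * n2 (nrm (x t)))) with (Om * (LAM * n2 (nrm (x t)))) by ring. apply Rmult_le_compat_l; lra. }
  assert (C2 : Om * LF (nrm (x t)) <= Om * LF (nrm (x 0))) by (apply Rmult_le_compat_l; lra).
  assert (C3 : om * (Om * LF (nrm (x 0))) < Om * (e0 * e0 * LAM * om / Om)) by
    (replace (om * (Om * LF (nrm (x 0)))) with (Om * (om * LF (nrm (x 0)))) by ring; apply Rmult_lt_compat_l; auto).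
  assert (E2 : Om * (e0 * e0 * LAM * om / Om) = om * (LAM * (e0 * e0))) by (field; nz).
  rewrite E2 in C3. apply Rmult_lt_reg_l in C3; auto.
  apply (Rmult_lt_reg_l LAM); auto. lra.
Qed.

Lemma clS_id r Y : (forall i, (i < 5)%nat -> Rabs (cmp i Y) <= r) -> clS r Y = Y.
Proof.
  intros H. destruct Y as [x y z u v]. unfold clS; simpl.
  rewrite (cl_id r x (H 0%nat ltac:(lia))), (cl_id r y (H 1%nat ltac:(lia))), (cl_id r z (H 2%nat ltac:(lia))),
    (cl_id r u (H 3%nat ltac:(lia))), (cl_id r v (H 4%nat ltac:(lia))). reflexivity.
Qed.

Lemma exist0 X0 : sdist X0 (endemic_eq N mu beta sigma gamma p rho) < d0 ->
  exists x, is_solution_on Fld x p_infty /\ x 0 = X0.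
Proof.
  intros H0.
  set (Gcl := Gc mm aa bb cc mu RR).
  assert (HRp := RR_pos). assert (HR1 := RR_le1).
  destruct (picard_exists Gcl (4 * (mm + aa + bb + cc + mu)) (5 * (mm + aa + bb + cc + mu) + 1)) with (X0 := nrm X0) as [y [Hy Hy0]].
  { assert (H1 := mm_pos). assert (H2 := aa_pos). assert (H3 := bb_pos). assert (H4 := cc_pos). lra. }
  { assert (H1 := mm_pos). assert (H2 := aa_pos). assert (H3 := bb_pos). assert (H4 := cc_pos). lra. }
  { intros i X. unfold Gcl. apply Gc_bound; posh2. }
  { intros i X Y. unfold Gcl. apply Gc_lip; posh2. }
  destruct (sol_comps _ _ _ Hy) as [Dy Cy].
  assert (Hreg0 : LF (y 0) < LAM * (RR * RR)) by (rewrite Hy0; apply init_region; auto).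
  assert (HG : forall u, LF (y u) < LAM * (RR * RR) -> Gcl (y u) = Gm (y u)).
  { intros u Hu. unfold Gcl, Gc, Gm. rewrite clS_id; auto. intros i Hi. apply region; auto. }
  assert (Hstay : forall t, 0 <= t -> LF (y t) <= LF (y 0)).
  { intros t Ht. destruct (Req_dec t 0) as [->|Hne]; [lra|].
    apply (invariance (fun s => LF (y s)) (fun u => DL (y u) (Gcl (y u))) (LAM * (RR * RR)) t); auto; [lra|..].
    - apply rc_L. intros i Hi. apply rc_of_at_right. apply Cy; auto.
    - intros u Hu. apply deriv_L. intros i Hi. apply Dy; auto; [lra|exact I].
    - intros u Hu Hl. rewrite HG by auto. apply dneg'; auto. }
  assert (HG' : forall t, 0 <= t -> Gcl (y t) = Gm (y t)) by (intros t Ht; apply HG; specialize (Hstay t Ht); lra).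
  exists (fun s => denorm (y s)). split.
  - apply sol_of_comps.
    + intros i t Hi Ht.
      eapply dfun; [|eapply dval; [apply (dden (fun s => cmp i (y s)) t (cmp i (Gcl (y t))) (cmp i Pv)); apply Dy; auto; exact I|]].
      * intros s. simpl. rewrite cmp_denorm; auto.
      * rewrite Fld_denorm by auto. rewrite HG' by lra. reflexivity.
    + intros i Hi. rewrite (cmp_denorm i (y 0)) by auto.
      apply (filterlim_ext (fun s => cmp i Pv * (1 + cmp i (y s)))).
      * intros s. rewrite cmp_denorm; auto.
      * apply filterlim_affine. apply Cy; auto.
  - simpl. rewrite Hy0. apply denorm_nrm.
Qed.

Lemma attract0 x : is_solution_on Fld x p_infty -> sdist (x 0) (endemic_eq N mu beta sigma gamma p rho) < d0 ->
  is_lim (fun t => sdist (x t) (endemic_eq N mu beta sigma gamma p rho)) p_infty 0.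
Proof.
  intros Hs H0.
  assert (Hreg : LF (nrm (x 0)) < LAM * (RR * RR)) by (apply init_region; auto).
  assert (Hst : forall t, 0 <= t -> LF (nrm (x t)) <= LF (nrm (x 0))) by (intros t Ht; apply (stay x p_infty Hs Hreg t Ht I)).
  assert (HL := LAM_pos). assert (HU := LAMU_pos). assert (HK := KAP_pos). assert (HO := Om_pos).
  set (kq := KAP / (2 * LAMU)). assert (Hkq : 0 < kq) by (unfold kq; pos).
  set (h := fun s => LF (nrm (x s))).
  set (h0 := h 0).
  assert (Hpos : forall s, 0 <= h s).
  { intros s. unfold h. assert (H := Lf_lower mm aa bb cc mu ltac:(posh) ltac:(posh) ltac:(posh) ltac:(posh) ltac:(posh) (nrm (x s))).
    assert (H' := n2_nonneg (nrm (x s))). assert (0 <= LAM * n2 (nrm (x s))) by (apply Rmult_le_pos; lra). lra. }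
  assert (Hd : forall t, 0 < t -> DL (nrm (x t)) (Gm (nrm (x t))) <= - kq * h t).
  { intros t Ht. assert (Hr : LF (nrm (x t)) < LAM * (RR * RR)) by (specialize (Hst t ltac:(lra)); lra).
    eapply Rle_trans; [apply dneg; auto|].
    assert (HUp := Lf_upper mm aa bb cc mu ltac:(posh) ltac:(posh) ltac:(posh) ltac:(posh) ltac:(posh) (nrm (x t))).
    unfold kq, h. 
    assert (E : - (KAP / (2 * LAMU)) * LF (nrm (x t)) = - (KAP / 2) * (LF (nrm (x t)) / LAMU)) by (field; nz).
    rewrite E. apply Ropp_le_cancel. rewrite !Ropp_mult_distr_l_reverse, !Ropp_involutive.
    apply Rmult_le_compat_l; [lra|]. apply (Rmult_le_reg_l LAMU); auto.
    replace (LAMU * (LF (nrm (x t)) / LAMU)) with (LF (nrm (x t))) by (field; nz). lra. }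
  assert (Hdec : forall t, 0 < t -> exp (kq * t) * h t <= h0).
  { intros t Ht.
    set (g := fun s => exp (kq * s) * h s).
    assert (Hg0 : g 0 = h0) by (unfold g, h0; rewrite Rmult_0_r, exp_0; ring).
    rewrite <- Hg0. fold (g t).
    apply (mono_le g (fun u => kq * exp (kq * u) * h u + exp (kq * u) * DL (nrm (x u)) (Gm (nrm (x u)))) 0 t); auto.
    - apply rc_mult; [apply rc_exp|]. apply (traj_rc x p_infty Hs).
    - intros u Hu. unfold g. 
      apply (dmult (fun s => exp (kq * s)) h u (kq * exp (kq * u)) (DL (nrm (x u)) (Gm (nrm (x u))))).
      + auto_derive; [auto|ring].
      + apply (traj_h_deriv x p_infty Hs); [lra|exact I].
    - intros u Hu. assert (He := exp_pos (kq * u)). specialize (Hd u ltac:(lra)).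
      assert (exp (kq * u) * DL (nrm (x u)) (Gm (nrm (x u))) <= exp (kq * u) * (- kq * h u)) by (apply Rmult_le_compat_l; lra).
      lra. }
  apply is_lim_spec. intros e. simpl.
  assert (He := cond_pos e). set (ee := pos e) in *.
  exists (Om * h0 / (LAM * (ee * ee) * kq)).
  assert (Hh0 : 0 <= h0) by apply Hpos.
  assert (HM : 0 <= Om * h0 / (LAM * (ee * ee) * kq)) by (apply Rmult_le_pos; [apply Rmult_le_pos; lra|apply Rlt_le, Rinv_0_lt_compat; pos]).
  intros t Ht. rewrite Rminus_0_r.
  assert (Hsd : 0 <= sdist (x t) (endemic_eq N mu beta sigma gamma p rho)) by (rewrite sdist_eq; apply sqrt_pos).
  rewrite Rabs_right by lra. apply lt_sdist; auto.
  assert (Ht0 : 0 < t) by lra.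
  assert (Hdt := Hdec t Ht0). assert (Hex := exp_ineq1_le (kq * t)).
  assert (Hht := Hpos t).
  assert (C1 : (1 + kq * t) * h t <= h0) by (apply Rle_trans with (exp (kq * t) * h t); [apply Rmult_le_compat_r; lra|auto]).
  destruct (S2_bounds (x t)) as [_ B2].
  assert (HLt := Lf_lower mm aa bb cc mu ltac:(posh) ltac:(posh) ltac:(posh) ltac:(posh) ltac:(posh) (nrm (x t))).
  fold (h t) in HLt.
  assert (C2 : LAM * S2 (x t) <= Om * h t).
  { apply Rle_trans with (LAM * (Om * n2 (nrm (x t)))); [apply Rmult_le_compat_l; lra|].
    replace (LAM * (Om * n2 (nrm (x t)))) with (Om * (LAM * n2 (nrm (x t)))) by ring. apply Rmult_le_compat_l; lra. }
  assert (Hk1 : 0 < 1 + kq * t) by (assert (0 < kq * t) by pos; lra).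
  assert (C3 : LAM * S2 (x t) * (1 + kq * t) <= Om * h0).
  { apply Rle_trans with (Om * h t * (1 + kq * t)); [apply Rmult_le_compat_r; lra|].
    replace (Om * h t * (1 + kq * t)) with (Om * ((1 + kq * t) * h t)) by ring. apply Rmult_le_compat_l; lra. }
  assert (C4 : Om * h0 < LAM * (ee * ee) * kq * t).
  { assert (Hpp : 0 < LAM * (ee * ee) * kq) by pos.
    replace (Om * h0) with (Om * h0 / (LAM * (ee * ee) * kq) * (LAM * (ee * ee) * kq)) by (field; nz).
    rewrite (Rmult_comm (LAM * (ee * ee) * kq) t). apply Rmult_lt_compat_r; auto. }
  assert (C5 : LAM * (ee * ee) * kq * t < LAM * (ee * ee) * (1 + kq * t)).
  { assert (0 < LAM * (ee * ee)) by pos. replace (LAM * (ee * ee) * kq * t) with (LAM * (ee * ee) * (kq * t)) by ring.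
    apply Rmult_lt_compat_l; auto. lra. }
  assert (C6 : LAM * S2 (x t) * (1 + kq * t) < LAM * (ee * ee) * (1 + kq * t)) by lra.
  apply Rmult_lt_reg_r in C6; auto. apply Rmult_lt_reg_l in C6; auto.
Qed.

Lemma main_in : is_equilibrium (seirv_field N mu beta sigma gamma p rho) (endemic_eq N mu beta sigma gamma p rho) /\
  asymptotically_stable (seirv_field N mu beta sigma gamma p rho) (endemic_eq N mu beta sigma gamma p rho).
Proof.
  split.
  - unfold is_equilibrium. rewrite Pe_eq.
    assert (E : mkState Se Ee Ie Re Ve = denorm zero_state) by (unfold denorm; simpl; f_equal; ring).
    rewrite E. fold Fld. apply state_ext. intros i Hi. rewrite Fld_denorm by auto.
    do 5 (destruct i as [|i]; [simpl; ring|]). lia.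
  - split; [split|].
    + intros e He. exact (stab1 e He).
    + exists d0. split; [apply d0_pos|]. intros X0 HX0. apply exist0; auto.
    + exists d0. split; [apply d0_pos|]. intros x Hx HX0. apply attract0; auto.
Qed.
End Model.

Theorem mainTheorem6 (N mu beta sigma gamma p rho : R) :
  0 < N -> 0 < mu -> 0 < beta -> 0 < sigma -> 0 < gamma -> 0 < p ->
  0 < rho -> rho < 1 ->
  repro_number N mu beta sigma gamma p rho > 1 ->
  is_equilibrium (seirv_field N mu beta sigma gamma p rho)
                 (endemic_eq N mu beta sigma gamma p rho) /\
  asymptotically_stable (seirv_field N mu beta sigma gamma p rho)
                        (endemic_eq N mu beta sigma gamma p rho).
Proof.
  intros. apply main_in; assumption.
Qed.
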